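(* Let $(\mathcal{M},\mathbf{g})$ be a spherically symmetric spacetime satisfying Einstein's equation $\mathbf{G}=8\pi\mathbf{T}$ with a spherically symmetric perfect-fluid energy-momentum tensor $\mathbf{T}=\varrho\,\underline{\mathbf{u}}\otimes\underline{\mathbf{u}}+p\,(\underline{\mathbf{u}}\otimes\underline{\mathbf{u}}-\mathbf{g})$, with $\varrho+p\neq 0$, and restrict to the region where $\mathrm{d}R$ is spacelike. Then: (i) $E$ is temporally constant iff $p=0$ or $\mathrm{d}R(\mathbf{u})=0$; (ii) $E$ is spatially constant iff $\varrho=0$; (iii) $E_W$ is temporally constant iff $\sigma=0$; (iv) $E_W$ is spatially constant iff $\varrho$ is spatially constant; (v) $E_R$ is temporally (respectively spatially) constant iff $R^3\varrho$ is temporally (respectively spatially) constant.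
   Context: Signature $(+,-,-,-)$. A spherically symmetric spacetime is locally a warped product $\mathcal{M}=\mathcal{B}\times S^2$ with metric $\mathbf{g}=\mathbf{g}_{\mathcal{B}}-R^2\mathbf{g}_{S^2}$, where $(\mathcal{B},\mathbf{g}_{\mathcal{B}})$ is a 2-dimensional Lorentzian manifold and $R$ (areal radius) a positive function on $\mathcal{B}$. The fluid four-velocity $\mathbf{u}$ is a future-pointing unit timelike spherically symmetric vector field (tangent to $\mathcal{B}$), $\underline{\mathbf{u}}=\mathbf{g}(\mathbf{u},\cdot)$, $\varrho$ the density and $p$ the pressure (no equation of state assumed). Let $\mathbf{e}$ be the unit vector field tangent to $\mathcal{B}$, orthogonal to $\mathbf{u}$, pointing in the direction of increasing $R$. A scalar $f$ is called temporally constant if $\mathrm{d}f(\mathbf{u})=0$ and spatially constant if $\mathrm{d}f(\mathbf{e})=0$. The Misner--Sharp energy is $E=-\tfrac12 R^3K=\tfrac{R}{2}\bigl(1+\langle\mathrm{d}R,\mathrm{d}R\rangle\bigr)$, where $K$ is the sectional curvature of the 2-plane tangent to the $SO(3)$-orbit. Decompose the Riemann tensor as $\mathbf{Riem}=\mathbf{Ricci}+\mathbf{Weyl}$ with $\mathbf{Ricci}=(\mathbf{Ric}-\tfrac16\mathrm{Scal}\,\mathbf{g})\odot\mathbf{g}$ ($\odot$ the Kulkarni--Nomizu product, $(\mathbf{a}\odot\mathbf{b})(\mathbf{W},\mathbf{Z},\mathbf{X},\mathbf{Y})=\tfrac12[\mathbf{a}(\mathbf{W},\mathbf{X})\mathbf{b}(\mathbf{Z},\mathbf{Y})-\mathbf{a}(\mathbf{W},\mathbf{Y})\mathbf{b}(\mathbf{Z},\mathbf{X})+\mathbf{b}(\mathbf{W},\mathbf{X})\mathbf{a}(\mathbf{Z},\mathbf{Y})-\mathbf{b}(\mathbf{W},\mathbf{Y})\mathbf{a}(\mathbf{Z},\mathbf{X})]$);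 the Ricci and Weyl parts of the Misner--Sharp energy are $E_R=-\tfrac12R^3K_R$ and $E_W=-\tfrac12R^3K_W$, where $K_R,K_W$ are the sectional curvatures of the orbit-tangent plane computed with $\mathbf{Ricci}$ and $\mathbf{Weyl}$ in place of $\mathbf{Riem}$, so $E=E_R+E_W$. The expansion of $\mathbf{u}$ is $\theta=\mathrm{div}\,\mathbf{u}$ and its shear scalar is $\sigma=\mathrm{d}R(\mathbf{u})/R-\tfrac13\theta$. *)

(* Defs.v *)
From Stdlib Require Import Reals List.
From Coquelicot Require Import Coquelicot.
Open Scope R_scope.

(** We work in a local chart of the spacetime M = B x S^2:
    a point is x : nat -> R with x 0, x 1 coordinates on the base B
    (on an open set V of R^2) and x 2 = theta in (0,pi), x 3 = phi the
    standard polar coordinates on S^2.  Only indices 0..3 are used. *)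
Definition pt := nat -> R.

Definition upd (x : pt) (i : nat) (h : R) : pt :=
  fun j => if Nat.eqb j i then h else x j.

Definition pd (i : nat) (f : pt -> R) (x : pt) : R :=
  Derive (fun h => f (upd x i h)) (x i).

Definition sum4 (f : nat -> R) : R := f 0%nat + f 1%nat + f 2%nat + f 3%nat.

(** a spherically symmetric scalar (function on B) lifted to M *)
Definition lift (f : R -> R -> R) : pt -> R := fun x => f (x 0%nat) (x 1%nat).

Fixpoint iterpd (l : list bool) (f : R -> R -> R) : R -> R -> R :=
  match l with
  | nil => f
  | b :: l' =>
      let h := iterpd l' f in
      if b then (fun t r => Derive (fun s => h s r) t)
      else (fun t r => Derive (fun s => h t s) r)
  end.

Definition smooth_on (V : R -> R -> Prop) (f : R -> R -> R) : Prop :=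
  forall (l : list bool) (t r : R), V t r ->
    ex_derive (fun s => iterpd l f s r) t /\
    ex_derive (fun s => iterpd l f t s) r /\
    continuity_2d_pt (iterpd l f) t r.

Definition open2 (V : R -> R -> Prop) : Prop :=
  forall t r, V t r -> exists eps, 0 < eps /\
    forall t' r', Rabs (t' - t) < eps -> Rabs (r' - r) < eps -> V t' r'.

Definition dom4 (V : R -> R -> Prop) (x : pt) : Prop :=
  V (x 0%nat) (x 1%nat) /\ 0 < x 2%nat < PI.

(** * The warped-product metric g = g_B - R^2 g_{S^2}, signature (+,-,-,-),
    g_B = g00 dx0^2 + 2 g01 dx0 dx1 + g11 dx1^2. *)
Definition tensor2 := nat -> nat -> pt -> R.

Definition metric (g00 g01 g11 Rr : R -> R -> R) : tensor2 :=
  fun a b x =>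
    let t := x 0%nat in let r := x 1%nat in
    match a, b with
    | O, O => g00 t r
    | O, S O | S O, O => g01 t r
    | S O, S O => g11 t r
    | 2%nat, 2%nat => - (Rr t r) ^ 2
    | 3%nat, 3%nat => - (Rr t r) ^ 2 * (sin (x 2%nat)) ^ 2
    | _, _ => 0
    end.

Definition metric_inv (g00 g01 g11 Rr : R -> R -> R) : tensor2 :=
  fun a b x =>
    let t := x 0%nat in let r := x 1%nat in
    let dt := g00 t r * g11 t r - g01 t r ^ 2 in
    match a, b with
    | O, O => g11 t r / dt
    | O, S O | S O, O => - g01 t r / dt
    | S O, S O => g00 t r / dt
    | 2%nat, 2%nat => - / (Rr t r) ^ 2
    | 3%nat, 3%nat => - / ((Rr t r) ^ 2 * (sin (x 2%nat)) ^ 2)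
    | _, _ => 0
    end.

Section Curv.
Variables (g gi : tensor2).

Definition Gam (a b c : nat) (x : pt) : R :=
  / 2 * sum4 (fun d => gi a d x *
     (pd b (g d c) x + pd c (g d b) x - pd d (g b c) x)).

(** R^e_{bcd} = components of R(d_c,d_d) d_b,
    R(X,Y)Z = nabla_X nabla_Y Z - nabla_Y nabla_X Z - nabla_[X,Y] Z *)
Definition RiemUp (e b c d : nat) (x : pt) : R :=
  pd c (Gam e d b) x - pd d (Gam e c b) x +
  sum4 (fun f => Gam e c f x * Gam f d b x - Gam e d f x * Gam f c b x).

Definition Riem (a b c d : nat) (x : pt) : R :=
  sum4 (fun e => g a e x * RiemUp e b c d x).

Definition Ric (b d : nat) (x : pt) : R :=
  sum4 (fun a => sum4 (fun c => gi a c x * Riem a b c d x)).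

Definition Scal (x : pt) : R :=
  sum4 (fun b => sum4 (fun d => gi b d x * Ric b d x)).

Definition Ein (a b : nat) (x : pt) : R := Ric a b x - / 2 * Scal x * g a b x.

Definition KN (A B : tensor2) (w z xx y : nat) (p : pt) : R :=
  / 2 * (A w xx p * B z y p - A w y p * B z xx p
         + B w xx p * A z y p - B w y p * A z xx p).

Definition RicciPart (a b c d : nat) (x : pt) : R :=
  KN (fun i j p => Ric i j p - / 6 * Scal p * g i j p) g a b c d x.

Definition WeylPart (a b c d : nat) (x : pt) : R :=
  Riem a b c d x - RicciPart a b c d x.

Definition orbitK (Rm : nat -> nat -> nat -> nat -> pt -> R) (x : pt) : R :=
  Rm 2%nat 3%nat 2%nat 3%nat x /
  (g 2%nat 2%nat x * g 3%nat 3%nat x - g 2%nat 3%nat x ^ 2).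

Definition dir (v : nat -> pt -> R) (f : pt -> R) (x : pt) : R :=
  sum4 (fun a => v a x * pd a f x).

Definition gdot (v w : nat -> pt -> R) (x : pt) : R :=
  sum4 (fun a => sum4 (fun b => g a b x * v a x * w b x)).

Definition codot (f : pt -> R) (x : pt) : R :=
  sum4 (fun a => sum4 (fun b => gi a b x * pd a f x * pd b f x)).

Definition divg (v : nat -> pt -> R) (x : pt) : R :=
  sum4 (fun a => pd a (v a) x + sum4 (fun b => Gam a a b x * v b x)).

Definition lower (v : nat -> pt -> R) (a : nat) (x : pt) : R :=
  sum4 (fun b => g a b x * v b x).

End Curv.

Definition bvec (v0 v1 : R -> R -> R) : nat -> pt -> R :=
  fun a x => match a with
             | O => v0 (x 0%nat) (x 1%nat)
             | S O => v1 (x 0%nat) (x 1%nat)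
             | _ => 0 end.

(** Misner--Sharp energy and its Ricci and Weyl parts *)
Definition MSE (g gi : tensor2) (Rr : R -> R -> R) (x : pt) : R :=
  - / 2 * lift Rr x ^ 3 * orbitK g (Riem g gi) x.
Definition MSE_R (g gi : tensor2) (Rr : R -> R -> R) (x : pt) : R :=
  - / 2 * lift Rr x ^ 3 * orbitK g (RicciPart g gi) x.
Definition MSE_W (g gi : tensor2) (Rr : R -> R -> R) (x : pt) : R :=
  - / 2 * lift Rr x ^ 3 * orbitK g (WeylPart g gi) x.

Definition Tfluid (g : tensor2) (u : nat -> pt -> R) (rho p : pt -> R)
  (a b : nat) (x : pt) : R :=
  rho x * lower g u a x * lower g u b x
  + p x * (lower g u a x * lower g u b x - g a b x).

Definition shear (g gi : tensor2) (u : nat -> pt -> R) (Rr : R -> R -> R) (x : pt) : R :=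
  dir u (lift Rr) x / lift Rr x - / 3 * divg g gi u x.

(* Main.v *)
Require Import Defs.
From Stdlib Require Import Reals List Lia Lra QArith Qreals.
From Coquelicot Require Import Coquelicot.
Open Scope R_scope.


Lemma iterpd_app (l1 l2 : list bool) (F : R -> R -> R) :
  iterpd (l1 ++ l2) F = iterpd l1 (iterpd l2 F).
Proof. induction l1 as [|b l1 IH]; simpl; [reflexivity|]. rewrite IH. reflexivity. Qed.

Lemma smooth_iter V F l : smooth_on V F -> smooth_on V (iterpd l F).
Proof. intros H l' t r Hv. rewrite <- iterpd_app. apply H; exact Hv. Qed.

Lemma open_loc2 V t r : open2 V -> V t r -> locally_2d (fun u v => V u v) t r.
Proof.
  intros HO Hv. destruct (HO t r Hv) as [eps [Heps H]].
  exists (mkposreal eps Heps). intros u v Hu Hv'. apply H; assumption.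
Qed.

Lemma loc2_impl (P Q : R -> R -> Prop) t r :
  (forall u v, P u v -> Q u v) -> locally_2d P t r -> locally_2d Q t r.
Proof. intros H [d Hd]. exists d. intros; apply H, Hd; assumption. Qed.

Lemma swap2 V f t r : open2 V -> smooth_on V f -> V t r ->
  iterpd (false :: true :: nil) f t r = iterpd (true :: false :: nil) f t r.
Proof.
  intros HO Hs Hv. simpl. symmetry.
  apply (Schwarz f t r).
  - apply (loc2_impl (fun u v => V u v)); [|apply open_loc2; auto].
    intros u v Huv. repeat split.
    + exact (proj1 (Hs nil u v Huv)).
    + exact (proj1 (proj2 (Hs nil u v Huv))).
    + exact (proj1 (Hs (false::nil) u v Huv)).
    + exact (proj1 (proj2 (Hs (true::nil) u v Huv))).
  - exact (proj2 (proj2 (Hs (true::false::nil) t r Hv))).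
  - exact (proj2 (proj2 (Hs (false::true::nil) t r Hv))).
Qed.

Lemma iter_cong V F b l1 l2 t r : open2 V ->
  (forall t r, V t r -> iterpd l1 F t r = iterpd l2 F t r) -> V t r ->
  iterpd (b :: l1) F t r = iterpd (b :: l2) F t r.
Proof.
  intros HO H Hv. destruct (HO t r Hv) as [eps [Heps Hb]].
  destruct b; simpl; apply Derive_ext_loc; exists (mkposreal eps Heps); intros z Hz;
  apply H, Hb; unfold ball in Hz; simpl in Hz; unfold AbsRing_ball, abs, minus, plus, opp in Hz;
  simpl in Hz; try assumption; rewrite Rminus_eq_0, Rabs_R0; exact Heps.
Qed.

Lemma push_false V F i L t r : open2 V -> smooth_on V F -> V t r ->
  iterpd (false :: repeat true i ++ L) F t r = iterpd (repeat true i ++ false :: L) F t r.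
Proof.
  intros HO Hs. revert t r. induction i as [|i IH]; intros t r Hv; [reflexivity|].
  simpl repeat. simpl app.
  transitivity (iterpd (true :: false :: repeat true i ++ L) F t r).
  - change (false :: true :: repeat true i ++ L) with ((false :: true :: nil) ++ (repeat true i ++ L)).
    change (true :: false :: repeat true i ++ L) with ((true :: false :: nil) ++ (repeat true i ++ L)).
    rewrite (iterpd_app (false::true::nil)), (iterpd_app (true::false::nil)). apply (swap2 V); [exact HO | apply smooth_iter; exact Hs | exact Hv].
  - apply (iter_cong V); [exact HO | exact IH | exact Hv].
Qed.

Definition J (F : R -> R -> R) (i j : nat) : R -> R -> R :=
  iterpd (repeat true i ++ repeat false j) F.

Lemma J_dt F i j t r : Derive (fun s => J F i j s r) t = J F (S i) j t r.
Proof. reflexivity. Qed.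

Lemma J_dr V F i j t r : open2 V -> smooth_on V F -> V t r ->
  Derive (fun s => J F i j t s) r = J F i (S j) t r.
Proof.
  intros HO Hs Hv. unfold J.
  change (repeat false (S j)) with (false :: repeat false j).
  rewrite <- (push_false V F i (repeat false j) t r HO Hs Hv). reflexivity.
Qed.

Lemma J_ex_dt V F i j t r : smooth_on V F -> V t r -> ex_derive (fun s => J F i j s r) t.
Proof. intros Hs Hv. exact (proj1 (Hs _ t r Hv)). Qed.
Lemma J_ex_dr V F i j t r : smooth_on V F -> V t r -> ex_derive (fun s => J F i j t s) r.
Proof. intros Hs Hv. exact (proj1 (proj2 (Hs _ t r Hv))). Qed.
Lemma J00 F t r : J F 0 0 t r = F t r.
Proof. reflexivity. Qed.

Inductive ex :=
| EJ (f i j : nat)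
| EC (c : Q)
| EPi | ES | ECo | EID | EIR | EIS
| EAdd (a b : ex) | EMul (a b : ex) | EOpp (a : ex).

Definition env := nat -> (R -> R -> R).

Definition DeltaE (E : env) (y : pt) : R :=
  J (E 0%nat) 0 0 (y 0%nat) (y 1%nat) * J (E 2%nat) 0 0 (y 0%nat) (y 1%nat)
  + - (J (E 1%nat) 0 0 (y 0%nat) (y 1%nat) * J (E 1%nat) 0 0 (y 0%nat) (y 1%nat)).

Fixpoint eval (E : env) (e : ex) (y : pt) : R :=
  match e with
  | EJ f i j => J (E f) i j (y 0%nat) (y 1%nat)
  | EC c => Q2R c
  | EPi => PI
  | ES => sin (y 2%nat)
  | ECo => cos (y 2%nat)
  | EID => / DeltaE E y
  | EIR => / J (E 3%nat) 0 0 (y 0%nat) (y 1%nat)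
  | EIS => / sin (y 2%nat)
  | EAdd a b => eval E a y + eval E b y
  | EMul a b => eval E a y * eval E b y
  | EOpp a => - eval E a y
  end.

Definition DXe : ex := EAdd (EMul (EJ 0 0 0) (EJ 2 0 0)) (EOpp (EMul (EJ 1 0 0) (EJ 1 0 0))).

Definition DJ (k f i j : nat) : ex :=
  match k with O => EJ f (S i) j | S O => EJ f i (S j) | _ => EC 0 end.

Fixpoint Dex (k : nat) (e : ex) : ex :=
  match e with
  | EJ f i j => DJ k f i j
  | EC _ | EPi => EC 0
  | ES => match k with 2%nat => ECo | _ => EC 0 end
  | ECo => match k with 2%nat => EOpp ES | _ => EC 0 end
  | EID => EOpp (EMul (EAdd (EAdd (EMul (DJ k 0 0 0) (EJ 2 0 0)) (EMul (EJ 0 0 0) (DJ k 2 0 0)))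
                            (EOpp (EAdd (EMul (DJ k 1 0 0) (EJ 1 0 0)) (EMul (EJ 1 0 0) (DJ k 1 0 0)))))
                      (EMul EID EID))
  | EIR => EOpp (EMul (DJ k 3 0 0) (EMul EIR EIR))
  | EIS => EOpp (EMul (match k with 2%nat => ECo | _ => EC 0 end) (EMul EIS EIS))
  | EAdd a b => EAdd (Dex k a) (Dex k b)
  | EMul a b => EAdd (EMul (Dex k a) b) (EMul a (Dex k b))
  | EOpp a => EOpp (Dex k a)
  end.

Fixpoint wf (V : R -> R -> Prop) (E : env) (e : ex) (y : pt) : Prop :=
  match e with
  | EJ f _ _ => smooth_on V (E f)
  | EID => smooth_on V (E 0%nat) /\ smooth_on V (E 1%nat) /\ smooth_on V (E 2%nat) /\ DeltaE E y <> 0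
  | EIR => smooth_on V (E 3%nat) /\ J (E 3%nat) 0 0 (y 0%nat) (y 1%nat) <> 0
  | EIS => sin (y 2%nat) <> 0
  | EAdd a b | EMul a b => wf V E a y /\ wf V E b y
  | EOpp a => wf V E a y
  | _ => True
  end.

Ltac splits := repeat match goal with |- _ /\ _ => split | |- True => exact I end.

Lemma wf_DJ V E k f i j y : smooth_on V (E f) -> wf V E (DJ k f i j) y.
Proof. destruct k as [|[|k]]; simpl; tauto. Qed.

Lemma wf_D V E e y k : wf V E e y -> wf V E (Dex k e) y.
Proof.
  induction e; simpl; intros H; repeat match goal with H: _ /\ _ |- _ => destruct H end;
  splits; try apply wf_DJ; try assumption; try (destruct k as [|[|[|k]]]; simpl; splits; assumption);
  match goal with IH : wf _ _ ?a _ -> _ |- wf _ _ (Dex _ ?a) _ => apply IH; assumption end.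
Qed.

Lemma eval_ext E e y y' : y 0%nat = y' 0%nat -> y 1%nat = y' 1%nat -> y 2%nat = y' 2%nat ->
  eval E e y = eval E e y'.
Proof. intros H0 H1 H2. unfold DeltaE. induction e; simpl; unfold DeltaE; congruence. Qed.

Lemma upd_same y k : forall j, upd y k (y k) j = y j.
Proof. intros j. unfold upd. destruct (Nat.eqb_spec j k); subst; auto. Qed.

Lemma eval_upd_same E e y k : eval E e (upd y k (y k)) = eval E e y.
Proof. apply eval_ext; apply upd_same. Qed.

Section Deriv.
Variable V : R -> R -> Prop.
Hypothesis HO : open2 V.
Variable E : env.

Lemma deriv_J f i j y k : dom4 V y -> smooth_on V (E f) ->
  ex_derive (fun h => eval E (EJ f i j) (upd y k h)) (y k) /\
  Derive (fun h => eval E (EJ f i j) (upd y k h)) (y k) = eval E (DJ k f i j) y.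
Proof.
  intros [Hv Hth] Hs.
  destruct k as [|[|[|k]]]; unfold upd; simpl.
  + split; [apply (J_ex_dt V); auto | reflexivity].
  + split; [apply (J_ex_dr V); auto | apply (J_dr V); auto].
  + split; [apply ex_derive_const | rewrite Derive_const; unfold Q2R; simpl; ring].
  + split; [apply ex_derive_const | rewrite Derive_const; unfold Q2R; simpl; ring].
Qed.

Lemma deriv_inv (f : R -> R) x df : ex_derive f x -> Derive f x = df -> f x <> 0 ->
  ex_derive (fun h => / f h) x /\ Derive (fun h => / f h) x = - (df * (/ f x * / f x)).
Proof.
  intros He Hd Hn. split; [apply ex_derive_inv; auto|].
  rewrite Derive_inv; auto. rewrite Hd. field. auto.
Qed.

Lemma deriv_eval e y k : dom4 V y -> wf V E e y ->
  ex_derive (fun h => eval E e (upd y k h)) (y k) /\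
  Derive (fun h => eval E e (upd y k h)) (y k) = eval E (Dex k e) y.
Proof.
  intros Hd. induction e as [f i j|c| | | | | | |a IHa b IHb|a IHa b IHb|a IHa]; intros Hw.
  - apply deriv_J; auto.
  - simpl. split; [apply ex_derive_const | rewrite Derive_const; unfold Q2R; simpl; ring].
  - simpl. split; [apply ex_derive_const | rewrite Derive_const; unfold Q2R; simpl; ring].
  - destruct k as [|[|[|k]]]; unfold upd; simpl.
    + split; [apply ex_derive_const | rewrite Derive_const; unfold Q2R; simpl; ring].
    + split; [apply ex_derive_const | rewrite Derive_const; unfold Q2R; simpl; ring].
    + split; [eexists; apply is_derive_sin | apply is_derive_unique, is_derive_sin].
    + split; [apply ex_derive_const | rewrite Derive_const; unfold Q2R; simpl; ring].
  - destruct k as [|[|[|k]]]; unfold upd; simpl.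
    + split; [apply ex_derive_const | rewrite Derive_const; unfold Q2R; simpl; ring].
    + split; [apply ex_derive_const | rewrite Derive_const; unfold Q2R; simpl; ring].
    + split; [eexists; apply is_derive_cos | apply is_derive_unique, is_derive_cos].
    + split; [apply ex_derive_const | rewrite Derive_const; unfold Q2R; simpl; ring].
  -
    simpl in Hw. destruct Hw as [S0 [S1 [S2 Hn]]].
    destruct (deriv_J 0 0 0 y k Hd S0) as [E0 D0].
    destruct (deriv_J 1 0 0 y k Hd S1) as [E1 D1].
    destruct (deriv_J 2 0 0 y k Hd S2) as [E2 D2].
    simpl in E0, E1, E2, D0, D1, D2.
    assert (EX : ex_derive (fun h => DeltaE E (upd y k h)) (y k)).
    { unfold DeltaE. apply (ex_derive_plus (V:=R_NormedModule)); [apply ex_derive_mult; auto|].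
      apply (ex_derive_opp (V:=R_NormedModule)). apply ex_derive_mult; auto. }
    assert (DXd : Derive (fun h => DeltaE E (upd y k h)) (y k) =
       eval E (EAdd (EAdd (EMul (DJ k 0 0 0) (EJ 2 0 0)) (EMul (EJ 0 0 0) (DJ k 2 0 0)))
                            (EOpp (EAdd (EMul (DJ k 1 0 0) (EJ 1 0 0)) (EMul (EJ 1 0 0) (DJ k 1 0 0))))) y).
    { unfold DeltaE. rewrite (Derive_plus (fun h => _ * _) (fun h => - _)).
      2: apply ex_derive_mult; auto.
      2: apply (ex_derive_opp (V:=R_NormedModule)); apply ex_derive_mult; auto.
      rewrite Derive_opp, !Derive_mult; auto. rewrite D0, D1, D2.
      rewrite !upd_same. simpl. ring. }
    assert (Hn' : DeltaE E (upd y k (y k)) <> 0).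
    { unfold DeltaE in *. rewrite !upd_same. exact Hn. }
    destruct (deriv_inv _ _ _ EX DXd Hn') as [Ei Di].
    simpl. split; [exact Ei|]. rewrite Di.
    replace (DeltaE E (upd y k (y k))) with (DeltaE E y).
    2: { unfold DeltaE. rewrite !upd_same. reflexivity. }
    reflexivity.
  - simpl in Hw. destruct Hw as [S3 Hn].
    destruct (deriv_J 3 0 0 y k Hd S3) as [E3 D3]. simpl in E3, D3.
    assert (Hn' : J (E 3%nat) 0 0 (upd y k (y k) 0%nat) (upd y k (y k) 1%nat) <> 0) by (rewrite !upd_same; exact Hn).
    destruct (deriv_inv _ _ _ E3 D3 Hn') as [Ei Di].
    simpl. split; [exact Ei|]. rewrite Di. rewrite !upd_same. reflexivity.
  - simpl in Hw. destruct k as [|[|[|k]]]; unfold upd; simpl.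
    + split; [apply ex_derive_const | rewrite Derive_const; unfold Q2R; simpl; field; auto].
    + split; [apply ex_derive_const | rewrite Derive_const; unfold Q2R; simpl; field; auto].
    + assert (Hs : ex_derive sin (y 2%nat)) by (eexists; apply is_derive_sin).
      destruct (deriv_inv sin (y 2%nat) (cos (y 2%nat)) Hs (is_derive_unique _ _ _ (is_derive_sin _)) Hw) as [Ei Di].
      split; [exact Ei | rewrite Di; reflexivity].
    + split; [apply ex_derive_const | rewrite Derive_const; unfold Q2R; simpl; field; auto].
  - destruct Hw as [Ha Hb]. destruct (IHa Ha) as [Ea Da]. destruct (IHb Hb) as [Eb Db].
    simpl. split; [apply (ex_derive_plus _ _ _ Ea Eb) |].
    rewrite Derive_plus; auto. rewrite Da, Db. reflexivity.
  - destruct Hw as [Ha Hb]. destruct (IHa Ha) as [Ea Da]. destruct (IHb Hb) as [Eb Db].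
    simpl. split; [apply (ex_derive_mult _ _ _ Ea Eb) |].
    rewrite Derive_mult; auto. rewrite Da, Db, !eval_upd_same. reflexivity.
  - destruct (IHa Hw) as [Ea Da]. simpl.
    split; [apply (ex_derive_opp _ _ Ea) |].
    rewrite Derive_opp, Da. reflexivity.
Qed.

Lemma pd_eval e y k : dom4 V y -> wf V E e y -> pd k (eval E e) y = eval E (Dex k e) y.
Proof. intros Hd Hw. exact (proj2 (deriv_eval e y k Hd Hw)). Qed.

Lemma dom4_loc y k : dom4 V y -> locally (y k) (fun h => dom4 V (upd y k h)).
Proof.
  intros [Hv [H1 H2]].
  destruct k as [|[|[|k]]].
  - destruct (HO _ _ Hv) as [eps [Heps Hb]].
    exists (mkposreal eps Heps). intros z Hz. unfold dom4, upd; simpl. split; [|auto].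
    apply Hb; [exact Hz|]. rewrite Rminus_eq_0, Rabs_R0; exact Heps.
  - destruct (HO _ _ Hv) as [eps [Heps Hb]].
    exists (mkposreal eps Heps). intros z Hz. unfold dom4, upd; simpl. split; [|auto].
    apply Hb; [|exact Hz]. rewrite Rminus_eq_0, Rabs_R0; exact Heps.
  - assert (Heps : 0 < Rmin (y 2%nat) (PI - y 2%nat)) by (apply Rmin_glb_lt; lra).
    exists (mkposreal _ Heps). intros z Hz. unfold dom4, upd; simpl. split; [auto|].
    unfold ball in Hz; simpl in Hz; unfold AbsRing_ball, abs, minus, plus, opp in Hz; simpl in Hz.
    pose proof (Rmin_l (y 2%nat) (PI - y 2%nat)). pose proof (Rmin_r (y 2%nat) (PI - y 2%nat)).
    apply Rabs_def2 in Hz. lra.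
  - exists (mkposreal 1 Rlt_0_1). intros z Hz. unfold dom4, upd; simpl. auto.
Qed.

Lemma pd_ext_dom (f f' : pt -> R) y k : dom4 V y ->
  (forall z, dom4 V z -> f z = f' z) -> pd k f y = pd k f' y.
Proof.
  intros Hd H. unfold pd. apply Derive_ext_loc.
  generalize (dom4_loc y k Hd). apply filter_imp. intros h Hh. apply H, Hh.
Qed.

End Deriv.

Lemma pd_ext_all (f f' : pt -> R) y k : (forall z, f z = f' z) -> pd k f y = pd k f' y.
Proof. intros H. unfold pd. apply Derive_ext. intros; apply H. Qed.

Arguments Qred : simpl never.
Arguments Qplus : simpl never.
Arguments Qmult : simpl never.
Arguments Qeq_bool : simpl never.

Inductive atom := AiD | AiR | AiS | Asin | Acos | API | AJ (f i j : nat).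

Definition arank a := match a with AiD=>0|AiR=>1|AiS=>2|Asin=>3|Acos=>4|API=>5|AJ _ _ _ =>6 end%nat.
Definition acmp (a b : atom) : comparison :=
  match a, b with
  | AJ f i j, AJ f' i' j' =>
      match Nat.compare f f' with
      | Eq => match Nat.compare i i' with Eq => Nat.compare j j' | c => c end
      | c => c end
  | _, _ => Nat.compare (arank a) (arank b)
  end.

Lemma acmp_eq a b : acmp a b = Eq -> a = b.
Proof.
  destruct a, b; simpl; intros H; try discriminate; auto.
  destruct (Nat.compare f f0) eqn:E1; try discriminate.
  destruct (Nat.compare i i0) eqn:E2; try discriminate.
  apply Nat.compare_eq in E1, E2, H. subst. reflexivity.
Qed.

Section NormS.
Variable E : env.
Variable y : pt.

Definition aval (a : atom) : R :=
  match a with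
  | AiD => / DeltaE E y
  | AiR => / J (E 3%nat) 0 0 (y 0%nat) (y 1%nat)
  | AiS => / sin (y 2%nat)
  | Asin => sin (y 2%nat)
  | Acos => cos (y 2%nat)
  | API => PI
  | AJ f i j => J (E f) i j (y 0%nat) (y 1%nat)
  end.

Definition mono := list atom.
Definition mval (m : mono) : R := fold_right (fun a r => aval a * r) 1 m.

Fixpoint minsert (a : atom) (m : mono) : mono :=
  match m with
  | nil => a :: nil
  | b :: m' => match acmp a b with Gt => b :: minsert a m' | _ => a :: m end
  end.

Lemma mval_minsert a m : mval (minsert a m) = aval a * mval m.
Proof.
  induction m as [|b m IH]; simpl; [reflexivity|].
  destruct (acmp a b); simpl; try reflexivity. rewrite IH. ring.
Qed.

Definition mmul (m1 m2 : mono) : mono := fold_right minsert m2 m1.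
Lemma mval_mmul m1 m2 : mval (mmul m1 m2) = mval m1 * mval m2.
Proof.
  induction m1 as [|a m1 IH]; simpl; [ring|]. rewrite mval_minsert, IH. ring.
Qed.

Fixpoint mcmp (m1 m2 : mono) : comparison :=
  match m1, m2 with
  | nil, nil => Eq
  | nil, _ => Lt
  | _, nil => Gt
  | a :: r, b :: s => match acmp a b with Eq => mcmp r s | c => c end
  end.

Lemma mcmp_eq m1 m2 : mcmp m1 m2 = Eq -> m1 = m2.
Proof.
  revert m2; induction m1 as [|a m1 IH]; destruct m2 as [|b m2]; simpl; intros H; try discriminate; auto.
  destruct (acmp a b) eqn:Ea; try discriminate. apply acmp_eq in Ea. subst. f_equal. auto.
Qed.

Definition poly := list (mono * Q).
Definition pval (p : poly) : R := fold_right (fun t r => Q2R (snd t) * mval (fst t) + r) 0 p.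

Lemma Q2R_zero c : Qeq_bool c 0 = true -> Q2R c = 0.
Proof. intros H. apply Qeq_bool_eq in H. rewrite (Qeq_eqR c 0%Q H). unfold Q2R; simpl; ring. Qed.

Lemma Q2R_red c : Q2R (Qred c) = Q2R c.
Proof. apply Qeq_eqR. apply Qred_correct. Qed.

Fixpoint pins (m : mono) (c : Q) (p : poly) : poly :=
  match p with
  | nil => if Qeq_bool c 0 then nil else (m, c) :: nil
  | (m', c') :: p' =>
      match mcmp m m' with
      | Lt => if Qeq_bool c 0 then p else (m, c) :: p
      | Eq => if Qeq_bool (Qred (c + c')) 0 then p' else (m, Qred (c + c')) :: p'
      | Gt => (m', c') :: pins m c p'
      end
  end.

Lemma pval_pins m c p : pval (pins m c p) = Q2R c * mval m + pval p.
Proof.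
  induction p as [|[m' c'] p IH]; simpl.
  - destruct (Qeq_bool c 0) eqn:Hc; simpl; [rewrite (Q2R_zero c Hc); ring | ring].
  - destruct (mcmp m m') eqn:Hm.
    + apply mcmp_eq in Hm. subst m'.
      destruct (Qeq_bool (Qred (c + c')) 0) eqn:Hc; simpl.
      * pose proof (Q2R_zero _ Hc) as H0. rewrite Q2R_red, Q2R_plus in H0.
        replace (Q2R c') with (- Q2R c) by lra. ring.
      * rewrite Q2R_red, Q2R_plus. ring.
    + destruct (Qeq_bool c 0) eqn:Hc; simpl; [rewrite (Q2R_zero c Hc); ring | ring].
    + simpl. rewrite IH. ring.
Qed.

Definition padd (p q : poly) : poly := fold_right (fun t acc => pins (fst t) (snd t) acc) q p.
Lemma pval_padd p q : pval (padd p q) = pval p + pval q.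
Proof. induction p as [|t p IH]; simpl; [ring|]. rewrite pval_pins, IH. ring. Qed.

Definition pscale (c : Q) (p : poly) : poly := map (fun t => (fst t, Qred (c * snd t))) p.
Lemma pval_pscale c p : pval (pscale c p) = Q2R c * pval p.
Proof. induction p as [|t p IH]; simpl; [ring|]. rewrite IH, Q2R_red, Q2R_mult. ring. Qed.

Definition amem (a : atom) (m : mono) : bool :=
  existsb (fun b => match acmp a b with Eq => true | _ => false end) m.

Fixpoint arem (a : atom) (m : mono) : mono :=
  match m with
  | nil => nil
  | b :: m' => match acmp a b with Eq => m' | _ => b :: arem a m' end
  end.

Lemma arem_val a m : amem a m = true -> aval a * mval (arem a m) = mval m.
Proof.
  induction m as [|b m IH]; simpl; intros H; [discriminate|].
  destruct (acmp a b) eqn:Hab.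
  - apply acmp_eq in Hab; subst. reflexivity.
  - simpl. rewrite <- IH by exact H. ring.
  - simpl. rewrite <- IH by exact H. ring.
Qed.

Hypothesis HnD : DeltaE E y <> 0.
Hypothesis HnR : J (E 3%nat) 0 0 (y 0%nat) (y 1%nat) <> 0.
Hypothesis HnS : sin (y 2%nat) <> 0.

Fixpoint red (fuel : nat) (m : mono) (c : Q) : poly :=
  match fuel with
  | O => pins m c nil
  | S fuel' =>
    if amem AiR m && amem (AJ 3 0 0) m then red fuel' (arem AiR (arem (AJ 3 0 0) m)) c
    else if amem AiS m && amem Asin m then red fuel' (arem AiS (arem Asin m)) c
    else if amem AiD m && amem (AJ 0 0 0) m && amem (AJ 2 0 0) m then
      let m' := arem AiD (arem (AJ 0 0 0) (arem (AJ 2 0 0) m)) in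
      padd (red fuel' m' c) (red fuel' (minsert AiD (minsert (AJ 1 0 0) (minsert (AJ 1 0 0) m'))) c)
    else pins m c nil
  end.

Lemma amem_arem a b m : amem a (arem b m) = true -> amem a m = true.
Proof.
  induction m as [|x m IH]; simpl; [auto|].
  destruct (acmp b x); simpl; intros H; try (apply Bool.orb_true_iff; right; exact H);
  apply Bool.orb_true_iff in H; destruct H as [H|H]; apply Bool.orb_true_iff; auto.
Qed.

Lemma amem_arem_other a b m : acmp a b <> Eq -> amem a m = true -> amem a (arem b m) = true.
Proof.
  intros Hab. induction m as [|x m IH]; simpl; [auto|].
  destruct (acmp b x) eqn:Hbx.
  - apply acmp_eq in Hbx. subst x. intros H. apply Bool.orb_true_iff in H. destruct H as [H|H]; auto.
    destruct (acmp a b); try discriminate. congruence.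
  - simpl. intros H. apply Bool.orb_true_iff in H. apply Bool.orb_true_iff. destruct H as [H|H]; auto.
  - simpl. intros H. apply Bool.orb_true_iff in H. apply Bool.orb_true_iff. destruct H as [H|H]; auto.
Qed.

Lemma pval_red fuel m c : pval (red fuel m c) = Q2R c * mval m.
Proof.
  revert m c; induction fuel as [|fuel IH]; intros m c; cbn [red].
  - rewrite pval_pins. simpl. ring.
  - destruct (amem AiR m && amem (AJ 3 0 0) m) eqn:H1.
    { apply andb_prop in H1. destruct H1 as [H1a H1b].
      rewrite IH. f_equal.
      assert (Hm : amem AiR (arem (AJ 3 0 0) m) = true)
        by (apply amem_arem_other; [discriminate | exact H1a]).
      rewrite <- (arem_val (AJ 3 0 0) m H1b).
      rewrite <- (arem_val AiR _ Hm). simpl.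
      field. exact HnR. }
    destruct (amem AiS m && amem Asin m) eqn:H2.
    { apply andb_prop in H2. destruct H2 as [H2a H2b].
      rewrite IH. f_equal.
      assert (Hm : amem AiS (arem Asin m) = true)
        by (apply amem_arem_other; [discriminate | exact H2a]).
      rewrite <- (arem_val Asin m H2b).
      rewrite <- (arem_val AiS _ Hm). simpl.
      field. exact HnS. }
    destruct (amem AiD m && amem (AJ 0 0 0) m && amem (AJ 2 0 0) m) eqn:H3.
    { apply andb_prop in H3. destruct H3 as [H3 H3c]. apply andb_prop in H3. destruct H3 as [H3a H3b].
      rewrite pval_padd, !IH, !mval_minsert.
      assert (Hb : amem (AJ 0 0 0) (arem (AJ 2 0 0) m) = true)
        by (apply amem_arem_other; [discriminate | exact H3b]).
      assert (Ha : amem AiD (arem (AJ 0 0 0) (arem (AJ 2 0 0) m)) = true).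
      { apply amem_arem_other; [discriminate|]. apply amem_arem_other; [discriminate|exact H3a]. }
      rewrite <- (arem_val (AJ 2 0 0) m H3c).
      rewrite <- (arem_val (AJ 0 0 0) _ Hb).
      rewrite <- (arem_val AiD _ Ha). simpl.
      unfold DeltaE in *. field. exact HnD. }
    rewrite pval_pins. simpl. ring.
Qed.

Definition redq (m : mono) (c : Q) : poly := red (2 * length m + 2) m c.

Definition pmulm (m : mono) (c : Q) (p : poly) : poly :=
  fold_right (fun t acc => padd (redq (mmul m (fst t)) (Qred (c * snd t))) acc) nil p.

Lemma pval_pmulm m c p : pval (pmulm m c p) = Q2R c * mval m * pval p.
Proof.
  induction p as [|t p IH]; simpl; [ring|].
  rewrite pval_padd, IH. unfold redq. rewrite pval_red, Q2R_red, Q2R_mult, mval_mmul. ring.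
Qed.

Definition pmul (p q : poly) : poly :=
  fold_right (fun t acc => padd (pmulm (fst t) (snd t) q) acc) nil p.

Lemma pval_pmul p q : pval (pmul p q) = pval p * pval q.
Proof. induction p as [|t p IH]; simpl; [ring|]. rewrite pval_padd, IH, pval_pmulm. ring. Qed.

End NormS.

Fixpoint norm (e : ex) : poly :=
  match e with
  | EJ f i j => (AJ f i j :: nil, 1%Q) :: nil
  | EC c => pins nil (Qred c) nil
  | EPi => (API :: nil, 1%Q) :: nil
  | ES => (Asin :: nil, 1%Q) :: nil
  | ECo => (Acos :: nil, 1%Q) :: nil
  | EID => (AiD :: nil, 1%Q) :: nil
  | EIR => (AiR :: nil, 1%Q) :: nil
  | EIS => (AiS :: nil, 1%Q) :: nil
  | EAdd a b => padd (norm a) (norm b)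
  | EMul a b => pmul (norm a) (norm b)
  | EOpp a => pscale (-1) (norm a)
  end.

Lemma Q2R_1 : Q2R 1 = 1.
Proof. unfold Q2R. simpl. field. Qed.

Lemma norm_sound E y e : DeltaE E y <> 0 -> J (E 3%nat) 0 0 (y 0%nat) (y 1%nat) <> 0 -> sin (y 2%nat) <> 0 ->
  eval E e y = pval E y (norm e).
Proof.
  intros H1 H2 H3. induction e; cbn [eval norm]; try (unfold pval, mval; cbn [fold_right fst snd aval]; rewrite Q2R_1; ring).
  - rewrite (pval_pins E y). unfold mval. simpl. rewrite Q2R_red. ring.
  - rewrite pval_padd, IHe1, IHe2. reflexivity.
  - rewrite pval_pmul, IHe1, IHe2; auto.
  - rewrite pval_pscale, IHe. unfold Q2R; simpl. field.
Qed.

Definition isnil (p : poly) : bool := match p with nil => true | _ => false end.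

Lemma norm_zero E y e : isnil (norm e) = true ->
  DeltaE E y <> 0 -> J (E 3%nat) 0 0 (y 0%nat) (y 1%nat) <> 0 -> sin (y 2%nat) <> 0 ->
  eval E e y = 0.
Proof.
  intros Hn H1 H2 H3. rewrite (norm_sound E y e H1 H2 H3).
  destruct (norm e); [reflexivity | discriminate].
Qed.

Lemma norm_eq E y a b : isnil (norm (EAdd a (EOpp b))) = true ->
  DeltaE E y <> 0 -> J (E 3%nat) 0 0 (y 0%nat) (y 1%nat) <> 0 -> sin (y 2%nat) <> 0 ->
  eval E a y = eval E b y.
Proof.
  intros Hn H1 H2 H3. pose proof (norm_zero E y _ Hn H1 H2 H3). simpl in H. lra.
Qed.

Definition Gx (a b : nat) : ex :=
  match a, b with
  | 0, 0 => EJ 0 0 0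
  | 0, 1 | 1, 0 => EJ 1 0 0
  | 1, 1 => EJ 2 0 0
  | 2, 2 => EOpp (EMul (EJ 3 0 0) (EJ 3 0 0))
  | 3, 3 => EOpp (EMul (EMul (EJ 3 0 0) (EJ 3 0 0)) (EMul ES ES))
  | _, _ => EC 0
  end%nat.

Definition Gix (a b : nat) : ex :=
  match a, b with
  | 0, 0 => EMul (EJ 2 0 0) EID
  | 0, 1 | 1, 0 => EOpp (EMul (EJ 1 0 0) EID)
  | 1, 1 => EMul (EJ 0 0 0) EID
  | 2, 2 => EOpp (EMul EIR EIR)
  | 3, 3 => EOpp (EMul (EMul EIR EIR) (EMul EIS EIS))
  | _, _ => EC 0
  end%nat.

Definition esum4 (f : nat -> ex) : ex := EAdd (EAdd (EAdd (f 0%nat) (f 1%nat)) (f 2%nat)) (f 3%nat).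
Definition GamC (a b c : nat) : ex :=
  match a, b, c with
  | 0, 0, 0 => (EAdd (EAdd (EMul (EMul (EMul (EC (Qmake (1) 2)) (EJ 0 0 1)) (EJ 1 0 0)) EID) (EMul (EMul (EMul (EC (Qmake (1) 2)) (EJ 0 1 0)) (EJ 2 0 0)) EID)) (EMul (EMul (EMul (EC (Qmake (-1) 1)) (EJ 1 0 0)) (EJ 1 1 0)) EID))
  | 0, 0, 1 => (EAdd (EMul (EMul (EMul (EC (Qmake (1) 2)) (EJ 0 0 1)) (EJ 2 0 0)) EID) (EMul (EMul (EMul (EC (Qmake (-1) 2)) (EJ 1 0 0)) (EJ 2 1 0)) EID))
  | 0, 1, 0 => (EAdd (EMul (EMul (EMul (EC (Qmake (1) 2)) (EJ 0 0 1)) (EJ 2 0 0)) EID) (EMul (EMul (EMul (EC (Qmake (-1) 2)) (EJ 1 0 0)) (EJ 2 1 0)) EID))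
  | 0, 1, 1 => (EAdd (EAdd (EMul (EMul (EMul (EC (Qmake (-1) 2)) (EJ 1 0 0)) (EJ 2 0 1)) EID) (EMul (EMul (EJ 1 0 1) (EJ 2 0 0)) EID)) (EMul (EMul (EMul (EC (Qmake (-1) 2)) (EJ 2 0 0)) (EJ 2 1 0)) EID))
  | 0, 2, 2 => (EAdd (EMul (EMul (EMul (EMul (EC (Qmake (-1) 1)) (EJ 3 0 0)) (EJ 3 0 1)) (EJ 1 0 0)) EID) (EMul (EMul (EMul (EJ 3 0 0) (EJ 3 1 0)) (EJ 2 0 0)) EID))
  | 0, 3, 3 => (EAdd (EMul (EMul (EMul (EMul (EMul (EMul (EC (Qmake (-1) 1)) (EJ 3 0 0)) (EJ 3 0 1)) (EJ 1 0 0)) EID) ES) ES) (EMul (EMul (EMul (EMul (EMul (EJ 3 0 0) (EJ 3 1 0)) (EJ 2 0 0)) EID) ES) ES))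
  | 1, 0, 0 => (EAdd (EAdd (EMul (EMul (EMul (EC (Qmake (-1) 2)) (EJ 0 0 0)) (EJ 0 0 1)) EID) (EMul (EMul (EJ 0 0 0) (EJ 1 1 0)) EID)) (EMul (EMul (EMul (EC (Qmake (-1) 2)) (EJ 0 1 0)) (EJ 1 0 0)) EID))
  | 1, 0, 1 => (EAdd (EMul (EMul (EMul (EC (Qmake (1) 2)) (EJ 0 0 0)) (EJ 2 1 0)) EID) (EMul (EMul (EMul (EC (Qmake (-1) 2)) (EJ 0 0 1)) (EJ 1 0 0)) EID))
  | 1, 1, 0 => (EAdd (EMul (EMul (EMul (EC (Qmake (1) 2)) (EJ 0 0 0)) (EJ 2 1 0)) EID) (EMul (EMul (EMul (EC (Qmake (-1) 2)) (EJ 0 0 1)) (EJ 1 0 0)) EID))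
  | 1, 1, 1 => (EAdd (EAdd (EMul (EMul (EMul (EC (Qmake (1) 2)) (EJ 0 0 0)) (EJ 2 0 1)) EID) (EMul (EMul (EMul (EC (Qmake (-1) 1)) (EJ 1 0 0)) (EJ 1 0 1)) EID)) (EMul (EMul (EMul (EC (Qmake (1) 2)) (EJ 1 0 0)) (EJ 2 1 0)) EID))
  | 1, 2, 2 => (EAdd (EMul (EMul (EMul (EJ 3 0 0) (EJ 3 0 1)) (EJ 0 0 0)) EID) (EMul (EMul (EMul (EMul (EC (Qmake (-1) 1)) (EJ 3 0 0)) (EJ 3 1 0)) (EJ 1 0 0)) EID))
  | 1, 3, 3 => (EAdd (EMul (EMul (EMul (EMul (EMul (EJ 3 0 0) (EJ 3 0 1)) (EJ 0 0 0)) EID) ES) ES) (EMul (EMul (EMul (EMul (EMul (EMul (EC (Qmake (-1) 1)) (EJ 3 0 0)) (EJ 3 1 0)) (EJ 1 0 0)) EID) ES) ES))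
  | 2, 0, 2 => (EMul EIR (EJ 3 1 0))
  | 2, 1, 2 => (EMul EIR (EJ 3 0 1))
  | 2, 2, 0 => (EMul EIR (EJ 3 1 0))
  | 2, 2, 1 => (EMul EIR (EJ 3 0 1))
  | 2, 3, 3 => (EMul (EMul (EC (Qmake (-1) 1)) ECo) ES)
  | 3, 0, 3 => (EMul EIR (EJ 3 1 0))
  | 3, 1, 3 => (EMul EIR (EJ 3 0 1))
  | 3, 2, 3 => (EMul ECo EIS)
  | 3, 3, 0 => (EMul EIR (EJ 3 1 0))
  | 3, 3, 1 => (EMul EIR (EJ 3 0 1))
  | 3, 3, 2 => (EMul ECo EIS)
  | _, _, _ => EC 0
  end%nat.

Definition RicC (a b : nat) : ex :=
  match a, b with
  | 0, 0 => (EAdd (EAdd (EAdd (EAdd (EAdd (EAdd (EAdd (EAdd (EAdd (EAdd (EAdd (EAdd (EAdd (EAdd (EAdd (EAdd (EAdd (EAdd (EAdd (EAdd (EAdd (EAdd (EAdd (EAdd (EAdd (EAdd (EAdd (EAdd (EMul (EMul (EMul (EMul (EMul (EC (Qmake (-1) 1)) EIR) (EJ 3 0 1)) (EJ 0 0 0)) (EJ 0 0 1)) EID) (EMul (EMul (EMul (EMul (EMul (EC (Qmake (2) 1)) EIR) (EJ 3 0 1)) (EJ 0 0 0)) (EJ 1 1 0)) EID)) (EMul (EMul (EMul (EMul (EMul (EC (Qmake (-1) 1)) EIR) (EJ 3 0 1)) (EJ 0 1 0)) (EJ 1 0 0)) EID)) (EMul (EMul (EMul (EMul EIR (EJ 3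 1 0)) (EJ 0 0 1)) (EJ 1 0 0)) EID)) (EMul (EMul (EMul (EMul EIR (EJ 3 1 0)) (EJ 0 1 0)) (EJ 2 0 0)) EID)) (EMul (EMul (EMul (EMul (EMul (EC (Qmake (-2) 1)) EIR) (EJ 3 1 0)) (EJ 1 0 0)) (EJ 1 1 0)) EID)) (EMul (EMul (EC (Qmake (-2) 1)) EIR) (EJ 3 2 0))) (EMul (EMul (EMul (EMul (EMul (EMul (EC (Qmake (-1) 2)) (EJ 0 0 0)) (EJ 0 0 1)) (EJ 1 0 0)) (EJ 1 0 1)) EID) EID)) (EMul (EMul (EMul (EMul (EMul (EMul (EC (Qmake (-1) 4)) (EJ 0 0 0)) (EJ 0 0 1)) (EJ 1 0 0)) (EJ 2 1 0)) EID) EID)) (EMul (EMul (EMul (EMul (EMul (EMul (EC (Qmake (-3) 2)) (EJ 0 0 0)) (EJ 0 0 1)) (EJ 1 1 0)) (EJ 2 0 0)) EID) EID)) (EMul (EMul (EMul (EMul (EMul (EMul (EC (Qmake (3) 4)) (EJ 0 0 0)) (EJ 0 0 1)) (EJ 0 0 1)) (EJ 2 0 0)) EID) EID)) (EMul (EMul (EMul (EC (Qmake (-1) 2)) (EJ 0 0 0)) (EJ 0 0 2)) EID)) (EMul (EMul (EMul (EMul (EMul (EMul (EC (Qmake (1) 4)) (EJ 0 0 0)) (EJ 0 1 0)) (EJ 1 0 0)) (EJ 2 0 1)) EID) EID)) (EMul (EMul (EMul (EMul (EMul (EMul (EC (Qmake (3) 4)) (EJ 0 0 0)) (EJ 0 1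 0)) (EJ 2 0 0)) (EJ 2 1 0)) EID) EID)) (EMul (EMul (EMul (EMul (EMul (EJ 0 0 0) (EJ 1 0 0)) (EJ 1 0 1)) (EJ 1 1 0)) EID) EID)) (EMul (EMul (EMul (EMul (EMul (EMul (EC (Qmake (-1) 2)) (EJ 0 0 0)) (EJ 1 0 0)) (EJ 1 1 0)) (EJ 2 1 0)) EID) EID)) (EMul (EMul (EJ 0 0 0) (EJ 1 1 1)) EID)) (EMul (EMul (EMul (EC (Qmake (-1) 2)) (EJ 0 0 0)) (EJ 2 2 0)) EID)) (EMul (EMul (EMul (EMul (EMul (EMul (EC (Qmake (1) 4)) (EJ 0 0 0)) (EJ 0 0 0)) (EJ 0 0 1)) (EJ 2 0 1)) EID) EID)) (EMul (EMul (EMul (EMul (EMul (EMul (EC (Qmake (-1) 2)) (EJ 0 0 0)) (EJ 0 0 0)) (EJ 1 1 0)) (EJ 2 0 1)) EID) EID)) (EMul (EMul (EMul (EMul (EMul (EMul (EC (Qmake (1) 4)) (EJ 0 0 0)) (EJ 0 0 0)) (EJ 2 1 0)) (EJ 2 1 0)) EID) EID)) (EMul (EMul (EMul (EMul (EMul (EMul (EC (Qmake (3) 2)) (EJ 0 0 1)) (EJ 1 0 0)) (EJ 1 0 0)) (EJ 1 1 0)) EID) EID)) (EMul (EMul (EMul (EC (Qmake (3) 2)) (EJ 0 0 1)) (EJ 1 1 0)) EID)) (EMul (EMul (EMul (EMul (EMul (EMul (EC (Qmake (-1) 2)) (EJ 0 0 1)) (EJ 0 0 1)) (EJ 1 0 0))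 (EJ 1 0 0)) EID) EID)) (EMul (EMul (EMul (EC (Qmake (-1) 2)) (EJ 0 0 1)) (EJ 0 0 1)) EID)) (EMul (EMul (EMul (EMul (EMul (EMul (EC (Qmake (-1) 2)) (EJ 0 1 0)) (EJ 1 0 0)) (EJ 1 0 0)) (EJ 1 0 1)) EID) EID)) (EMul (EMul (EMul (EMul (EMul (EMul (EC (Qmake (-1) 2)) (EJ 0 1 0)) (EJ 1 0 0)) (EJ 1 0 0)) (EJ 2 1 0)) EID) EID)) (EMul (EMul (EMul (EC (Qmake (-1) 2)) (EJ 0 1 0)) (EJ 1 0 1)) EID)) (EMul (EMul (EMul (EC (Qmake (-1) 2)) (EJ 0 1 0)) (EJ 2 1 0)) EID))
  | 0, 1 => (EAdd (EAdd (EAdd (EAdd (EAdd (EAdd (EAdd (EAdd (EAdd (EAdd (EAdd (EAdd (EAdd (EAdd (EAdd (EAdd (EAdd (EAdd (EAdd (EAdd (EAdd (EAdd (EAdd (EAdd (EAdd (EAdd (EAdd (EAdd (EMul (EMul (EMul (EMul EIR (EJ 3 0 1)) (EJ 0 0 0)) (EJ 2 1 0)) EID) (EMul (EMul (EMul (EMul (EMul (EC (Qmake (-1) 1)) EIR) (EJ 3 0 1)) (EJ 0 0 1)) (EJ 1 0 0)) EID)) (EMul (EMul (EMul (EMul EIR (EJ 3 1 0)) (EJ 0 0 1)) (EJ 2 0 0)) EID)) (EMul (EMul (EMul (EMul (EMul (EC (Qmake (-1) 1)) EIR) (EJ 3 1 0)) (EJ 1 0 0)) (EJ 2 1 0)) EID))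 (EMul (EMul (EC (Qmake (-2) 1)) EIR) (EJ 3 1 1))) (EMul (EMul (EMul (EMul (EMul (EMul (EC (Qmake (1) 4)) (EJ 0 0 0)) (EJ 0 0 1)) (EJ 1 0 0)) (EJ 2 0 1)) EID) EID)) (EMul (EMul (EMul (EMul (EMul (EMul (EC (Qmake (1) 2)) (EJ 0 0 0)) (EJ 0 0 1)) (EJ 1 0 1)) (EJ 2 0 0)) EID) EID)) (EMul (EMul (EMul (EMul (EMul (EMul (EC (Qmake (-1) 2)) (EJ 0 0 0)) (EJ 0 0 1)) (EJ 2 0 0)) (EJ 2 1 0)) EID) EID)) (EMul (EMul (EMul (EMul (EMul (EMul (EC (Qmake (1) 2)) (EJ 0 0 0)) (EJ 0 1 0)) (EJ 2 0 0)) (EJ 2 0 1)) EID) EID)) (EMul (EMul (EMul (EMul (EMul (EMul (EC (Qmake (-1) 2)) (EJ 0 0 0)) (EJ 1 0 0)) (EJ 1 1 0)) (EJ 2 0 1)) EID) EID)) (EMul (EMul (EMul (EMul (EMul (EMul (EC (Qmake (1) 4)) (EJ 0 0 0)) (EJ 1 0 0)) (EJ 2 1 0)) (EJ 2 1 0)) EID) EID)) (EMul (EMul (EMul (EMul (EMul (EMul (EC (Qmake (-1) 1)) (EJ 0 0 0)) (EJ 1 0 1)) (EJ 1 1 0)) (EJ 2 0 0)) EID) EID)) (EMul (EMul (EMul (EMul (EMul (EMul (EC (Qmake (1) 2)) (EJ 0 0 0)) (EJ 1 1 0)) (EJ 2 0 0)) (EJ 2 1 0)) EID) EID)) (EMul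 (EMul (EMul (EMul (EMul (EMul (EC (Qmake (-1) 1)) (EJ 0 0 1)) (EJ 1 0 0)) (EJ 1 0 0)) (EJ 1 0 1)) EID) EID)) (EMul (EMul (EMul (EMul (EMul (EMul (EC (Qmake (1) 4)) (EJ 0 0 1)) (EJ 1 0 0)) (EJ 1 0 0)) (EJ 2 1 0)) EID) EID)) (EMul (EMul (EMul (EC (Qmake (-1) 2)) (EJ 0 0 1)) (EJ 1 0 1)) EID)) (EMul (EMul (EMul (EC (Qmake (1) 2)) (EJ 0 0 1)) (EJ 2 1 0)) EID)) (EMul (EMul (EMul (EMul (EMul (EMul (EC (Qmake (1) 4)) (EJ 0 0 1)) (EJ 0 0 1)) (EJ 1 0 0)) (EJ 2 0 0)) EID) EID)) (EMul (EMul (EMul (EC (Qmake (-1) 2)) (EJ 0 0 2)) (EJ 1 0 0)) EID)) (EMul (EMul (EMul (EMul (EMul (EMul (EC (Qmake (-1) 2)) (EJ 0 1 0)) (EJ 1 0 0)) (EJ 1 0 1)) (EJ 2 0 0)) EID) EID)) (EMul (EMul (EMul (EMul (EMul (EMul (EC (Qmake (1) 4)) (EJ 0 1 0)) (EJ 1 0 0)) (EJ 2 0 0)) (EJ 2 1 0)) EID) EID)) (EMul (EMul (EMul (EMul (EMul (EMul (EC (Qmake (-1) 4)) (EJ 0 1 0)) (EJ 1 0 0)) (EJ 1 0 0)) (EJ 2 0 1)) EID) EID)) (EMul (EMul (EMul (EC (Qmake (-1) 2)) (EJ 0 1 0)) (EJ 2 0 1)) EID)) (EMul (EMul (EJ 1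 0 0) (EJ 1 1 1)) EID)) (EMul (EMul (EMul (EC (Qmake (-1) 2)) (EJ 1 0 0)) (EJ 2 2 0)) EID)) (EMul (EMul (EMul (EMul (EMul (EMul (EC (Qmake (2) 1)) (EJ 1 0 0)) (EJ 1 0 0)) (EJ 1 0 1)) (EJ 1 1 0)) EID) EID)) (EMul (EMul (EMul (EMul (EMul (EMul (EC (Qmake (-1) 1)) (EJ 1 0 0)) (EJ 1 0 0)) (EJ 1 1 0)) (EJ 2 1 0)) EID) EID)) (EMul (EMul (EJ 1 0 1) (EJ 1 1 0)) EID)) (EMul (EMul (EMul (EC (Qmake (-1) 2)) (EJ 1 1 0)) (EJ 2 1 0)) EID))
  | 1, 0 => (EAdd (EAdd (EAdd (EAdd (EAdd (EAdd (EAdd (EAdd (EAdd (EAdd (EAdd (EAdd (EAdd (EAdd (EAdd (EAdd (EAdd (EAdd (EAdd (EAdd (EAdd (EAdd (EAdd (EAdd (EAdd (EAdd (EAdd (EAdd (EMul (EMul (EMul (EMul EIR (EJ 3 0 1)) (EJ 0 0 0)) (EJ 2 1 0)) EID) (EMul (EMul (EMul (EMul (EMul (EC (Qmake (-1) 1)) EIR) (EJ 3 0 1)) (EJ 0 0 1)) (EJ 1 0 0)) EID)) (EMul (EMul (EMul (EMul EIR (EJ 3 1 0)) (EJ 0 0 1)) (EJ 2 0 0)) EID)) (EMul (EMul (EMul (EMul (EMul (EC (Qmake (-1) 1)) EIR) (EJ 3 1 0)) (EJ 1 0 0)) (EJ 2 1 0)) EID)) (EMul (EMul (EC (Qmake (-2)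 1)) EIR) (EJ 3 1 1))) (EMul (EMul (EMul (EMul (EMul (EMul (EC (Qmake (1) 4)) (EJ 0 0 0)) (EJ 0 0 1)) (EJ 1 0 0)) (EJ 2 0 1)) EID) EID)) (EMul (EMul (EMul (EMul (EMul (EMul (EC (Qmake (1) 2)) (EJ 0 0 0)) (EJ 0 0 1)) (EJ 1 0 1)) (EJ 2 0 0)) EID) EID)) (EMul (EMul (EMul (EMul (EMul (EMul (EC (Qmake (-1) 2)) (EJ 0 0 0)) (EJ 0 0 1)) (EJ 2 0 0)) (EJ 2 1 0)) EID) EID)) (EMul (EMul (EMul (EMul (EMul (EMul (EC (Qmake (1) 2)) (EJ 0 0 0)) (EJ 0 1 0)) (EJ 2 0 0)) (EJ 2 0 1)) EID) EID)) (EMul (EMul (EMul (EMul (EMul (EMul (EC (Qmake (-1) 2)) (EJ 0 0 0)) (EJ 1 0 0)) (EJ 1 1 0)) (EJ 2 0 1)) EID) EID)) (EMul (EMul (EMul (EMul (EMul (EMul (EC (Qmake (1) 4)) (EJ 0 0 0)) (EJ 1 0 0)) (EJ 2 1 0)) (EJ 2 1 0)) EID) EID)) (EMul (EMul (EMul (EMul (EMul (EMul (EC (Qmake (-1) 1)) (EJ 0 0 0)) (EJ 1 0 1)) (EJ 1 1 0)) (EJ 2 0 0)) EID) EID)) (EMul (EMul (EMul (EMul (EMul (EMul (EC (Qmake (1) 2)) (EJ 0 0 0)) (EJ 1 1 0)) (EJ 2 0 0)) (EJ 2 1 0)) EID) EID)) (EMul (EMul (EMul (EMul (EMul (EMul (EC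 (Qmake (-1) 1)) (EJ 0 0 1)) (EJ 1 0 0)) (EJ 1 0 0)) (EJ 1 0 1)) EID) EID)) (EMul (EMul (EMul (EMul (EMul (EMul (EC (Qmake (1) 4)) (EJ 0 0 1)) (EJ 1 0 0)) (EJ 1 0 0)) (EJ 2 1 0)) EID) EID)) (EMul (EMul (EMul (EC (Qmake (-1) 2)) (EJ 0 0 1)) (EJ 1 0 1)) EID)) (EMul (EMul (EMul (EC (Qmake (1) 2)) (EJ 0 0 1)) (EJ 2 1 0)) EID)) (EMul (EMul (EMul (EMul (EMul (EMul (EC (Qmake (1) 4)) (EJ 0 0 1)) (EJ 0 0 1)) (EJ 1 0 0)) (EJ 2 0 0)) EID) EID)) (EMul (EMul (EMul (EC (Qmake (-1) 2)) (EJ 0 0 2)) (EJ 1 0 0)) EID)) (EMul (EMul (EMul (EMul (EMul (EMul (EC (Qmake (-1) 2)) (EJ 0 1 0)) (EJ 1 0 0)) (EJ 1 0 1)) (EJ 2 0 0)) EID) EID)) (EMul (EMul (EMul (EMul (EMul (EMul (EC (Qmake (1) 4)) (EJ 0 1 0)) (EJ 1 0 0)) (EJ 2 0 0)) (EJ 2 1 0)) EID) EID)) (EMul (EMul (EMul (EMul (EMul (EMul (EC (Qmake (-1) 4)) (EJ 0 1 0)) (EJ 1 0 0)) (EJ 1 0 0)) (EJ 2 0 1)) EID) EID)) (EMul (EMul (EMul (EC (Qmake (-1) 2)) (EJ 0 1 0)) (EJ 2 0 1)) EID)) (EMul (EMul (EJ 1 0 0) (EJ 1 1 1)) EID)) (EMul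 (EMul (EMul (EC (Qmake (-1) 2)) (EJ 1 0 0)) (EJ 2 2 0)) EID)) (EMul (EMul (EMul (EMul (EMul (EMul (EC (Qmake (2) 1)) (EJ 1 0 0)) (EJ 1 0 0)) (EJ 1 0 1)) (EJ 1 1 0)) EID) EID)) (EMul (EMul (EMul (EMul (EMul (EMul (EC (Qmake (-1) 1)) (EJ 1 0 0)) (EJ 1 0 0)) (EJ 1 1 0)) (EJ 2 1 0)) EID) EID)) (EMul (EMul (EJ 1 0 1) (EJ 1 1 0)) EID)) (EMul (EMul (EMul (EC (Qmake (-1) 2)) (EJ 1 1 0)) (EJ 2 1 0)) EID))
  | 1, 1 => (EAdd (EAdd (EAdd (EAdd (EAdd (EAdd (EAdd (EAdd (EAdd (EAdd (EAdd (EAdd (EAdd (EAdd (EAdd (EAdd (EAdd (EAdd (EAdd (EAdd (EAdd (EAdd (EAdd (EAdd (EAdd (EAdd (EAdd (EAdd (EMul (EMul (EMul (EMul EIR (EJ 3 0 1)) (EJ 0 0 0)) (EJ 2 0 1)) EID) (EMul (EMul (EMul (EMul (EMul (EC (Qmake (-2) 1)) EIR) (EJ 3 0 1)) (EJ 1 0 0)) (EJ 1 0 1)) EID)) (EMul (EMul (EMul (EMul EIR (EJ 3 0 1)) (EJ 1 0 0)) (EJ 2 1 0)) EID)) (EMul (EMul (EC (Qmake (-2) 1)) EIR) (EJ 3 0 2))) (EMul (EMul (EMul (EMul (EMul (EC (Qmake (-1) 1)) EIR) (EJ 3 1 0)) (EJ 1 0 0)) (EJ 2 0 1)) EID)) (EMul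 (EMul (EMul (EMul (EMul (EC (Qmake (2) 1)) EIR) (EJ 3 1 0)) (EJ 1 0 1)) (EJ 2 0 0)) EID)) (EMul (EMul (EMul (EMul (EMul (EC (Qmake (-1) 1)) EIR) (EJ 3 1 0)) (EJ 2 0 0)) (EJ 2 1 0)) EID)) (EMul (EMul (EMul (EMul (EMul (EMul (EC (Qmake (3) 4)) (EJ 0 0 0)) (EJ 0 0 1)) (EJ 2 0 0)) (EJ 2 0 1)) EID) EID)) (EMul (EMul (EMul (EMul (EMul (EMul (EC (Qmake (-3) 2)) (EJ 0 0 0)) (EJ 1 0 1)) (EJ 2 0 0)) (EJ 2 1 0)) EID) EID)) (EMul (EMul (EMul (EMul (EMul (EMul (EC (Qmake (3) 4)) (EJ 0 0 0)) (EJ 2 0 0)) (EJ 2 1 0)) (EJ 2 1 0)) EID) EID)) (EMul (EMul (EMul (EMul (EMul (EMul (EC (Qmake (-1) 2)) (EJ 0 0 1)) (EJ 1 0 0)) (EJ 1 0 1)) (EJ 2 0 0)) EID) EID)) (EMul (EMul (EMul (EMul (EMul (EMul (EC (Qmake (-1) 4)) (EJ 0 0 1)) (EJ 1 0 0)) (EJ 2 0 0)) (EJ 2 1 0)) EID) EID)) (EMul (EMul (EMul (EMul (EMul (EMul (EC (Qmake (-1) 2)) (EJ 0 0 1)) (EJ 1 0 0)) (EJ 1 0 0)) (EJ 2 0 1)) EID) EID)) (EMul (EMul (EMul (EC (Qmake (-1) 2)) (EJ 0 0 1)) (EJ 2 0 1)) EID)) (EMul (EMul (EMul (EMul (EMul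 (EMul (EC (Qmake (1) 4)) (EJ 0 0 1)) (EJ 0 0 1)) (EJ 2 0 0)) (EJ 2 0 0)) EID) EID)) (EMul (EMul (EMul (EC (Qmake (-1) 2)) (EJ 0 0 2)) (EJ 2 0 0)) EID)) (EMul (EMul (EMul (EMul (EMul (EMul (EC (Qmake (1) 4)) (EJ 0 1 0)) (EJ 1 0 0)) (EJ 2 0 0)) (EJ 2 0 1)) EID) EID)) (EMul (EMul (EMul (EMul (EMul (EMul (EC (Qmake (-1) 2)) (EJ 0 1 0)) (EJ 1 0 1)) (EJ 2 0 0)) (EJ 2 0 0)) EID) EID)) (EMul (EMul (EMul (EMul (EMul (EMul (EC (Qmake (1) 4)) (EJ 0 1 0)) (EJ 2 0 0)) (EJ 2 0 0)) (EJ 2 1 0)) EID) EID)) (EMul (EMul (EMul (EMul (EMul (EJ 1 0 0) (EJ 1 0 1)) (EJ 1 1 0)) (EJ 2 0 0)) EID) EID)) (EMul (EMul (EMul (EMul (EMul (EMul (EC (Qmake (-1) 2)) (EJ 1 0 0)) (EJ 1 1 0)) (EJ 2 0 0)) (EJ 2 1 0)) EID) EID)) (EMul (EMul (EMul (EMul (EMul (EMul (EC (Qmake (3) 2)) (EJ 1 0 0)) (EJ 1 0 0)) (EJ 1 0 1)) (EJ 2 1 0)) EID) EID)) (EMul (EMul (EMul (EMul (EMul (EMul (EC (Qmake (-1) 2)) (EJ 1 0 0)) (EJ 1 0 0)) (EJ 1 1 0)) (EJ 2 0 1)) EID) EID)) (EMul (EMul (EMul (EMul (EMul (EMul (EC (Qmake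 (-1) 2)) (EJ 1 0 0)) (EJ 1 0 0)) (EJ 2 1 0)) (EJ 2 1 0)) EID) EID)) (EMul (EMul (EMul (EC (Qmake (3) 2)) (EJ 1 0 1)) (EJ 2 1 0)) EID)) (EMul (EMul (EMul (EC (Qmake (-1) 2)) (EJ 1 1 0)) (EJ 2 0 1)) EID)) (EMul (EMul (EJ 1 1 1) (EJ 2 0 0)) EID)) (EMul (EMul (EMul (EC (Qmake (-1) 2)) (EJ 2 0 0)) (EJ 2 2 0)) EID)) (EMul (EMul (EMul (EC (Qmake (-1) 2)) (EJ 2 1 0)) (EJ 2 1 0)) EID))
  | 2, 2 => (EAdd (EAdd (EAdd (EAdd (EAdd (EAdd (EAdd (EAdd (EAdd (EAdd (EAdd (EAdd (EAdd (EAdd (EAdd (EAdd (EAdd (EAdd (EAdd (EAdd (EAdd (EAdd (EC 1) (EMul (EMul (EMul (EMul (EMul (EMul (EMul (EC (Qmake (-1) 2)) (EJ 3 0 0)) (EJ 3 0 1)) (EJ 0 0 0)) (EJ 0 0 1)) (EJ 2 0 0)) EID) EID)) (EMul (EMul (EMul (EMul (EMul (EMul (EJ 3 0 0) (EJ 3 0 1)) (EJ 0 0 0)) (EJ 1 0 0)) (EJ 1 0 1)) EID) EID)) (EMul (EMul (EMul (EMul (EMul (EMul (EMul (EC (Qmake (1) 2)) (EJ 3 0 0)) (EJ 3 0 1)) (EJ 0 0 0)) (EJ 1 0 0)) (EJ 2 1 0)) EID) EID)) (EMul (EMul (EMul (EMul (EMul (EMul (EMul (EC (Qmake (-1) 2))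 (EJ 3 0 0)) (EJ 3 0 1)) (EJ 0 0 0)) (EJ 0 0 0)) (EJ 2 0 1)) EID) EID)) (EMul (EMul (EMul (EJ 3 0 0) (EJ 3 0 1)) (EJ 0 0 1)) EID)) (EMul (EMul (EMul (EMul (EMul (EMul (EMul (EC (Qmake (1) 2)) (EJ 3 0 0)) (EJ 3 0 1)) (EJ 0 1 0)) (EJ 1 0 0)) (EJ 2 0 0)) EID) EID)) (EMul (EMul (EMul (EMul (EMul (EMul (EMul (EC (Qmake (-1) 1)) (EJ 3 0 0)) (EJ 3 0 1)) (EJ 1 0 0)) (EJ 1 0 0)) (EJ 1 1 0)) EID) EID)) (EMul (EMul (EMul (EMul (EC (Qmake (-1) 1)) (EJ 3 0 0)) (EJ 3 0 1)) (EJ 1 1 0)) EID)) (EMul (EMul (EMul (EJ 3 0 0) (EJ 3 0 2)) (EJ 0 0 0)) EID)) (EMul (EMul (EMul (EMul (EMul (EMul (EMul (EC (Qmake (1) 2)) (EJ 3 0 0)) (EJ 3 1 0)) (EJ 0 0 0)) (EJ 1 0 0)) (EJ 2 0 1)) EID) EID)) (EMul (EMul (EMul (EMul (EMul (EMul (EMul (EC (Qmake (-1) 2)) (EJ 3 0 0)) (EJ 3 1 0)) (EJ 0 0 0)) (EJ 2 0 0)) (EJ 2 1 0)) EID) EID)) (EMul (EMul (EMul (EMul (EMul (EMul (EMul (EC (Qmake (1) 2)) (EJ 3 0 0)) (EJ 3 1 0)) (EJ 0 0 1)) (EJ 1 0 0)) (EJ 2 0 0)) EID) EID)) (EMul (EMul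 (EMul (EMul (EMul (EMul (EMul (EC (Qmake (-1) 2)) (EJ 3 0 0)) (EJ 3 1 0)) (EJ 0 1 0)) (EJ 2 0 0)) (EJ 2 0 0)) EID) EID)) (EMul (EMul (EMul (EMul (EMul (EMul (EJ 3 0 0) (EJ 3 1 0)) (EJ 1 0 0)) (EJ 1 1 0)) (EJ 2 0 0)) EID) EID)) (EMul (EMul (EMul (EMul (EMul (EMul (EMul (EC (Qmake (-1) 1)) (EJ 3 0 0)) (EJ 3 1 0)) (EJ 1 0 0)) (EJ 1 0 0)) (EJ 1 0 1)) EID) EID)) (EMul (EMul (EMul (EMul (EC (Qmake (-1) 1)) (EJ 3 0 0)) (EJ 3 1 0)) (EJ 1 0 1)) EID)) (EMul (EMul (EMul (EJ 3 0 0) (EJ 3 1 0)) (EJ 2 1 0)) EID)) (EMul (EMul (EMul (EMul (EC (Qmake (-2) 1)) (EJ 3 0 0)) (EJ 3 1 1)) (EJ 1 0 0)) EID)) (EMul (EMul (EMul (EJ 3 0 0) (EJ 3 2 0)) (EJ 2 0 0)) EID)) (EMul (EMul (EMul (EMul (EC (Qmake (-2) 1)) (EJ 3 0 1)) (EJ 3 1 0)) (EJ 1 0 0)) EID)) (EMul (EMul (EMul (EJ 3 0 1) (EJ 3 0 1)) (EJ 0 0 0)) EID)) (EMul (EMul (EMul (EJ 3 1 0) (EJ 3 1 0)) (EJ 2 0 0)) EID))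
  | 3, 3 => (EAdd (EAdd (EAdd (EAdd (EAdd (EAdd (EAdd (EAdd (EAdd (EAdd (EAdd (EAdd (EAdd (EAdd (EAdd (EAdd (EAdd (EAdd (EAdd (EAdd (EAdd (EAdd (EMul (EMul (EMul (EMul (EMul (EMul (EMul (EMul (EMul (EC (Qmake (-1) 2)) (EJ 3 0 0)) (EJ 3 0 1)) (EJ 0 0 0)) (EJ 0 0 1)) (EJ 2 0 0)) EID) EID) ES) ES) (EMul (EMul (EMul (EMul (EMul (EMul (EMul (EMul (EJ 3 0 0) (EJ 3 0 1)) (EJ 0 0 0)) (EJ 1 0 0)) (EJ 1 0 1)) EID) EID) ES) ES)) (EMul (EMul (EMul (EMul (EMul (EMul (EMul (EMul (EMul (EC (Qmake (1) 2)) (EJ 3 0 0)) (EJ 3 0 1)) (EJ 0 0 0)) (EJ 1 0 0)) (EJ 2 1 0)) EID) EID) ES) ES)) (EMul (EMul (EMul (EMul (EMul (EMul (EMul (EMul (EMul (EC (Qmake (-1) 2)) (EJ 3 0 0)) (EJ 3 0 1)) (EJ 0 0 0)) (EJ 0 0 0)) (EJ 2 0 1)) EID) EID) ES) ES)) (EMul (EMul (EMul (EMul (EMul (EJ 3 0 0) (EJ 3 0 1)) (EJ 0 0 1)) EID) ES) ES)) (EMul (EMul (EMul (EMul (EMul (EMul (EMul (EMul (EMul (EC (Qmake (1) 2)) (EJ 3 0 0)) (EJ 3 0 1)) (EJ 0 1 0)) (EJ 1 0 0)) (EJ 2 0 0)) EID) EID) ES) ES)) (EMul (EMul (EMul (EMul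 (EMul (EMul (EMul (EMul (EMul (EC (Qmake (-1) 1)) (EJ 3 0 0)) (EJ 3 0 1)) (EJ 1 0 0)) (EJ 1 0 0)) (EJ 1 1 0)) EID) EID) ES) ES)) (EMul (EMul (EMul (EMul (EMul (EMul (EC (Qmake (-1) 1)) (EJ 3 0 0)) (EJ 3 0 1)) (EJ 1 1 0)) EID) ES) ES)) (EMul (EMul (EMul (EMul (EMul (EJ 3 0 0) (EJ 3 0 2)) (EJ 0 0 0)) EID) ES) ES)) (EMul (EMul (EMul (EMul (EMul (EMul (EMul (EMul (EMul (EC (Qmake (1) 2)) (EJ 3 0 0)) (EJ 3 1 0)) (EJ 0 0 0)) (EJ 1 0 0)) (EJ 2 0 1)) EID) EID) ES) ES)) (EMul (EMul (EMul (EMul (EMul (EMul (EMul (EMul (EMul (EC (Qmake (-1) 2)) (EJ 3 0 0)) (EJ 3 1 0)) (EJ 0 0 0)) (EJ 2 0 0)) (EJ 2 1 0)) EID) EID) ES) ES)) (EMul (EMul (EMul (EMul (EMul (EMul (EMul (EMul (EMul (EC (Qmake (1) 2)) (EJ 3 0 0)) (EJ 3 1 0)) (EJ 0 0 1)) (EJ 1 0 0)) (EJ 2 0 0)) EID) EID) ES) ES)) (EMul (EMul (EMul (EMul (EMul (EMul (EMul (EMul (EMul (EC (Qmake (-1) 2)) (EJ 3 0 0)) (EJ 3 1 0)) (EJ 0 1 0)) (EJ 2 0 0)) (EJ 2 0 0)) EID) EID) ES) ES)) (EMul (EMul (EMul (EMul (EMul (EMul (EMul (EMul (EJ 3 0 0)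 (EJ 3 1 0)) (EJ 1 0 0)) (EJ 1 1 0)) (EJ 2 0 0)) EID) EID) ES) ES)) (EMul (EMul (EMul (EMul (EMul (EMul (EMul (EMul (EMul (EC (Qmake (-1) 1)) (EJ 3 0 0)) (EJ 3 1 0)) (EJ 1 0 0)) (EJ 1 0 0)) (EJ 1 0 1)) EID) EID) ES) ES)) (EMul (EMul (EMul (EMul (EMul (EMul (EC (Qmake (-1) 1)) (EJ 3 0 0)) (EJ 3 1 0)) (EJ 1 0 1)) EID) ES) ES)) (EMul (EMul (EMul (EMul (EMul (EJ 3 0 0) (EJ 3 1 0)) (EJ 2 1 0)) EID) ES) ES)) (EMul (EMul (EMul (EMul (EMul (EMul (EC (Qmake (-2) 1)) (EJ 3 0 0)) (EJ 3 1 1)) (EJ 1 0 0)) EID) ES) ES)) (EMul (EMul (EMul (EMul (EMul (EJ 3 0 0) (EJ 3 2 0)) (EJ 2 0 0)) EID) ES) ES)) (EMul (EMul (EMul (EMul (EMul (EMul (EC (Qmake (-2) 1)) (EJ 3 0 1)) (EJ 3 1 0)) (EJ 1 0 0)) EID) ES) ES)) (EMul (EMul (EMul (EMul (EMul (EJ 3 0 1) (EJ 3 0 1)) (EJ 0 0 0)) EID) ES) ES)) (EMul (EMul (EMul (EMul (EMul (EJ 3 1 0) (EJ 3 1 0)) (EJ 2 0 0)) EID) ES) ES)) (EMul ES ES))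
  | _, _ => EC 0
  end%nat.

Definition ScalC : ex := (EAdd (EAdd (EAdd (EAdd (EAdd (EAdd (EAdd (EAdd (EAdd (EAdd (EAdd (EAdd (EAdd (EAdd (EAdd (EAdd (EAdd (EAdd (EAdd (EAdd (EAdd (EAdd (EAdd (EAdd (EAdd (EAdd (EAdd (EAdd (EAdd (EAdd (EAdd (EAdd (EAdd (EAdd (EAdd (EAdd (EAdd (EAdd (EAdd (EAdd (EAdd (EAdd (EAdd (EAdd (EAdd (EAdd (EAdd (EAdd (EAdd (EAdd (EAdd (EAdd (EAdd (EAdd (EAdd (EAdd (EAdd (EAdd (EAdd (EAdd (EAdd (EAdd (EAdd (EAdd (EAdd (EAdd (EAdd (EAdd (EAdd (EMul (EMul (EC (Qmake (-2) 1)) EIR) EIR) (EMul (EMul (EMul (EMul (EMul (EMul (EC (Qmake (4) 1)) EIR) EIR) (EJ 3 0 1)) (EJ 3 1 0)) (EJ 1 0 0)) EID)) (EMul (EMul (EMul (EMul (EMul (EMul (EC (Qmake (-2) 1)) EIR) EIR) (EJ 3 0 1)) (EJ 3 0 1)) (EJ 0 0 0)) EID)) (EMul (EMul (EMul (EMul (EMul (EMul (EC (Qmake (-2) 1)) EIR) EIR) (EJ 3 1 0)) (EJ 3 1 0)) (EJ 2 0 0)) EID)) (EMul (EMul (EMul (EMul (EMul (EMul (EMul (EC (Qmake (-4) 1)) EIR) (EJ 3 0 1)) (EJ 0 0 0)) (EJ 1 0 0)) (EJ 1 0 1)) EID) EID)) (EMul (EMul (EMul (EMul (EMul (EMul (EMul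 (EC (Qmake (-2) 1)) EIR) (EJ 3 0 1)) (EJ 0 0 0)) (EJ 1 0 0)) (EJ 2 1 0)) EID) EID)) (EMul (EMul (EMul (EMul (EMul (EMul (EMul (EC (Qmake (2) 1)) EIR) (EJ 3 0 1)) (EJ 0 0 0)) (EJ 1 1 0)) (EJ 2 0 0)) EID) EID)) (EMul (EMul (EMul (EMul (EMul (EMul (EMul (EC (Qmake (2) 1)) EIR) (EJ 3 0 1)) (EJ 0 0 0)) (EJ 0 0 0)) (EJ 2 0 1)) EID) EID)) (EMul (EMul (EMul (EMul (EMul (EMul (EMul (EC (Qmake (2) 1)) EIR) (EJ 3 0 1)) (EJ 0 0 1)) (EJ 1 0 0)) (EJ 1 0 0)) EID) EID)) (EMul (EMul (EMul (EMul (EC (Qmake (-2) 1)) EIR) (EJ 3 0 1)) (EJ 0 0 1)) EID)) (EMul (EMul (EMul (EMul (EMul (EMul (EMul (EC (Qmake (-2) 1)) EIR) (EJ 3 0 1)) (EJ 0 1 0)) (EJ 1 0 0)) (EJ 2 0 0)) EID) EID)) (EMul (EMul (EMul (EMul (EMul (EMul (EMul (EC (Qmake (2) 1)) EIR) (EJ 3 0 1)) (EJ 1 0 0)) (EJ 1 0 0)) (EJ 1 1 0)) EID) EID)) (EMul (EMul (EMul (EMul (EC (Qmake (2) 1)) EIR) (EJ 3 0 1)) (EJ 1 1 0)) EID)) (EMul (EMul (EMul (EMul (EC (Qmake (-4) 1)) EIR) (EJ 3 0 2)) (EJ 0 0 0)) EID)) (EMul (EMul (EMul (EMul (EMul (EMul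 (EMul (EC (Qmake (-2) 1)) EIR) (EJ 3 1 0)) (EJ 0 0 0)) (EJ 1 0 0)) (EJ 2 0 1)) EID) EID)) (EMul (EMul (EMul (EMul (EMul (EMul (EMul (EC (Qmake (2) 1)) EIR) (EJ 3 1 0)) (EJ 0 0 0)) (EJ 1 0 1)) (EJ 2 0 0)) EID) EID)) (EMul (EMul (EMul (EMul (EMul (EMul (EMul (EC (Qmake (-2) 1)) EIR) (EJ 3 1 0)) (EJ 0 0 1)) (EJ 1 0 0)) (EJ 2 0 0)) EID) EID)) (EMul (EMul (EMul (EMul (EMul (EMul (EMul (EC (Qmake (2) 1)) EIR) (EJ 3 1 0)) (EJ 0 1 0)) (EJ 2 0 0)) (EJ 2 0 0)) EID) EID)) (EMul (EMul (EMul (EMul (EMul (EMul (EMul (EC (Qmake (-4) 1)) EIR) (EJ 3 1 0)) (EJ 1 0 0)) (EJ 1 1 0)) (EJ 2 0 0)) EID) EID)) (EMul (EMul (EMul (EMul (EMul (EMul (EMul (EC (Qmake (2) 1)) EIR) (EJ 3 1 0)) (EJ 1 0 0)) (EJ 1 0 0)) (EJ 1 0 1)) EID) EID)) (EMul (EMul (EMul (EMul (EMul (EMul (EMul (EC (Qmake (2) 1)) EIR) (EJ 3 1 0)) (EJ 1 0 0)) (EJ 1 0 0)) (EJ 2 1 0)) EID) EID)) (EMul (EMul (EMul (EMul (EC (Qmake (2) 1)) EIR) (EJ 3 1 0)) (EJ 1 0 1)) EID)) (EMul (EMul (EMul (EMul (EC (Qmake (-2) 1)) EIR) (EJ 3 1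 0)) (EJ 2 1 0)) EID)) (EMul (EMul (EMul (EMul (EC (Qmake (8) 1)) EIR) (EJ 3 1 1)) (EJ 1 0 0)) EID)) (EMul (EMul (EMul (EMul (EC (Qmake (-4) 1)) EIR) (EJ 3 2 0)) (EJ 2 0 0)) EID)) (EMul (EMul (EMul (EMul (EMul (EMul (EMul (EMul (EC (Qmake (-2) 1)) (EJ 0 0 0)) (EJ 0 0 1)) (EJ 1 0 0)) (EJ 1 0 1)) (EJ 2 0 0)) EID) EID) EID)) (EMul (EMul (EMul (EMul (EMul (EMul (EMul (EMul (EC (Qmake (1) 2)) (EJ 0 0 0)) (EJ 0 0 1)) (EJ 1 0 0)) (EJ 2 0 0)) (EJ 2 1 0)) EID) EID) EID)) (EMul (EMul (EMul (EMul (EMul (EMul (EMul (EMul (EC (Qmake (-1) 1)) (EJ 0 0 0)) (EJ 0 0 1)) (EJ 1 0 0)) (EJ 1 0 0)) (EJ 2 0 1)) EID) EID) EID)) (EMul (EMul (EMul (EMul (EMul (EMul (EMul (EMul (EC (Qmake (-3) 2)) (EJ 0 0 0)) (EJ 0 0 1)) (EJ 1 1 0)) (EJ 2 0 0)) (EJ 2 0 0)) EID) EID) EID)) (EMul (EMul (EMul (EMul (EMul (EC (Qmake (-1) 2)) (EJ 0 0 0)) (EJ 0 0 1)) (EJ 2 0 1)) EID) EID)) (EMul (EMul (EMul (EMul (EMul (EMul (EMul (EJ 0 0 0) (EJ 0 0 1)) (EJ 0 0 1)) (EJ 2 0 0)) (EJ 2 0 0)) EID) EID) EID)) (EMul (EMul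 (EMul (EMul (EMul (EC (Qmake (-1) 1)) (EJ 0 0 0)) (EJ 0 0 2)) (EJ 2 0 0)) EID) EID)) (EMul (EMul (EMul (EMul (EMul (EMul (EMul (EMul (EC (Qmake (-1) 2)) (EJ 0 0 0)) (EJ 0 1 0)) (EJ 1 0 0)) (EJ 2 0 0)) (EJ 2 0 1)) EID) EID) EID)) (EMul (EMul (EMul (EMul (EMul (EMul (EMul (EMul (EC (Qmake (-1) 2)) (EJ 0 0 0)) (EJ 0 1 0)) (EJ 1 0 1)) (EJ 2 0 0)) (EJ 2 0 0)) EID) EID) EID)) (EMul (EMul (EMul (EMul (EMul (EMul (EMul (EJ 0 0 0) (EJ 0 1 0)) (EJ 2 0 0)) (EJ 2 0 0)) (EJ 2 1 0)) EID) EID) EID)) (EMul (EMul (EMul (EMul (EMul (EMul (EMul (EMul (EC (Qmake (4) 1)) (EJ 0 0 0)) (EJ 1 0 0)) (EJ 1 0 1)) (EJ 1 1 0)) (EJ 2 0 0)) EID) EID) EID)) (EMul (EMul (EMul (EMul (EMul (EMul (EMul (EMul (EC (Qmake (-2) 1)) (EJ 0 0 0)) (EJ 1 0 0)) (EJ 1 1 0)) (EJ 2 0 0)) (EJ 2 1 0)) EID) EID) EID)) (EMul (EMul (EMul (EMul (EMul (EMul (EMul (EMul (EC (Qmake (3) 2)) (EJ 0 0 0)) (EJ 1 0 0)) (EJ 1 0 0)) (EJ 1 0 1)) (EJ 2 1 0)) EID) EID) EID)) (EMul (EMul (EMul (EMul (EMul (EMul (EMul (EMul (EC (Qmake (1)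 2)) (EJ 0 0 0)) (EJ 1 0 0)) (EJ 1 0 0)) (EJ 1 1 0)) (EJ 2 0 1)) EID) EID) EID)) (EMul (EMul (EMul (EMul (EMul (EMul (EMul (EMul (EC (Qmake (-1) 1)) (EJ 0 0 0)) (EJ 1 0 0)) (EJ 1 0 0)) (EJ 2 1 0)) (EJ 2 1 0)) EID) EID) EID)) (EMul (EMul (EMul (EMul (EMul (EC (Qmake (3) 2)) (EJ 0 0 0)) (EJ 1 0 1)) (EJ 2 1 0)) EID) EID)) (EMul (EMul (EMul (EMul (EMul (EC (Qmake (-1) 2)) (EJ 0 0 0)) (EJ 1 1 0)) (EJ 2 0 1)) EID) EID)) (EMul (EMul (EMul (EMul (EMul (EC (Qmake (2) 1)) (EJ 0 0 0)) (EJ 1 1 1)) (EJ 2 0 0)) EID) EID)) (EMul (EMul (EMul (EMul (EMul (EC (Qmake (-1) 1)) (EJ 0 0 0)) (EJ 2 0 0)) (EJ 2 2 0)) EID) EID)) (EMul (EMul (EMul (EMul (EMul (EC (Qmake (-1) 2)) (EJ 0 0 0)) (EJ 2 1 0)) (EJ 2 1 0)) EID) EID)) (EMul (EMul (EMul (EMul (EMul (EMul (EMul (EJ 0 0 0) (EJ 0 0 0)) (EJ 0 0 1)) (EJ 2 0 0)) (EJ 2 0 1)) EID) EID) EID)) (EMul (EMul (EMul (EMul (EMul (EMul (EMul (EMul (EC (Qmake (-3) 2)) (EJ 0 0 0)) (EJ 0 0 0)) (EJ 1 0 1)) (EJ 2 0 0)) (EJ 2 1 0)) EID) EID) EID)) (EMul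 (EMul (EMul (EMul (EMul (EMul (EMul (EMul (EC (Qmake (-1) 2)) (EJ 0 0 0)) (EJ 0 0 0)) (EJ 1 1 0)) (EJ 2 0 0)) (EJ 2 0 1)) EID) EID) EID)) (EMul (EMul (EMul (EMul (EMul (EMul (EMul (EJ 0 0 0) (EJ 0 0 0)) (EJ 2 0 0)) (EJ 2 1 0)) (EJ 2 1 0)) EID) EID) EID)) (EMul (EMul (EMul (EMul (EJ 0 0 1) (EJ 1 0 0)) (EJ 1 0 1)) EID) EID)) (EMul (EMul (EMul (EMul (EMul (EC (Qmake (-1) 1)) (EJ 0 0 1)) (EJ 1 0 0)) (EJ 2 1 0)) EID) EID)) (EMul (EMul (EMul (EMul (EMul (EMul (EMul (EMul (EC (Qmake (3) 2)) (EJ 0 0 1)) (EJ 1 0 0)) (EJ 1 0 0)) (EJ 1 1 0)) (EJ 2 0 0)) EID) EID) EID)) (EMul (EMul (EMul (EMul (EMul (EMul (EMul (EMul (EC (Qmake (2) 1)) (EJ 0 0 1)) (EJ 1 0 0)) (EJ 1 0 0)) (EJ 1 0 0)) (EJ 1 0 1)) EID) EID) EID)) (EMul (EMul (EMul (EMul (EMul (EMul (EMul (EMul (EC (Qmake (-1) 2)) (EJ 0 0 1)) (EJ 1 0 0)) (EJ 1 0 0)) (EJ 1 0 0)) (EJ 2 1 0)) EID) EID) EID)) (EMul (EMul (EMul (EMul (EMul (EC (Qmake (3) 2)) (EJ 0 0 1)) (EJ 1 1 0)) (EJ 2 0 0)) EID) EID)) (EMul (EMul (EMul (EMul (EMul (EMul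 (EMul (EMul (EC (Qmake (-1) 1)) (EJ 0 0 1)) (EJ 0 0 1)) (EJ 1 0 0)) (EJ 1 0 0)) (EJ 2 0 0)) EID) EID) EID)) (EMul (EMul (EMul (EMul (EMul (EC (Qmake (-1) 2)) (EJ 0 0 1)) (EJ 0 0 1)) (EJ 2 0 0)) EID) EID)) (EMul (EMul (EMul (EMul (EJ 0 0 2) (EJ 1 0 0)) (EJ 1 0 0)) EID) EID)) (EMul (EMul (EMul (EMul (EJ 0 1 0) (EJ 1 0 0)) (EJ 2 0 1)) EID) EID)) (EMul (EMul (EMul (EMul (EMul (EMul (EMul (EMul (EC (Qmake (1) 2)) (EJ 0 1 0)) (EJ 1 0 0)) (EJ 1 0 0)) (EJ 1 0 1)) (EJ 2 0 0)) EID) EID) EID)) (EMul (EMul (EMul (EMul (EMul (EMul (EMul (EMul (EC (Qmake (-1) 1)) (EJ 0 1 0)) (EJ 1 0 0)) (EJ 1 0 0)) (EJ 2 0 0)) (EJ 2 1 0)) EID) EID) EID)) (EMul (EMul (EMul (EMul (EMul (EMul (EMul (EMul (EC (Qmake (1) 2)) (EJ 0 1 0)) (EJ 1 0 0)) (EJ 1 0 0)) (EJ 1 0 0)) (EJ 2 0 1)) EID) EID) EID)) (EMul (EMul (EMul (EMul (EMul (EC (Qmake (-1) 2)) (EJ 0 1 0)) (EJ 1 0 1)) (EJ 2 0 0)) EID) EID)) (EMul (EMul (EMul (EMul (EMul (EC (Qmake (-1) 2)) (EJ 0 1 0)) (EJ 2 0 0)) (EJ 2 1 0)) EID) EID)) (EMul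 (EMul (EMul (EMul (EMul (EC (Qmake (-2) 1)) (EJ 1 0 0)) (EJ 1 0 1)) (EJ 1 1 0)) EID) EID)) (EMul (EMul (EMul (EMul (EJ 1 0 0) (EJ 1 1 0)) (EJ 2 1 0)) EID) EID)) (EMul (EMul (EMul (EMul (EMul (EC (Qmake (-2) 1)) (EJ 1 0 0)) (EJ 1 0 0)) (EJ 1 1 1)) EID) EID)) (EMul (EMul (EMul (EMul (EJ 1 0 0) (EJ 1 0 0)) (EJ 2 2 0)) EID) EID)) (EMul (EMul (EMul (EMul (EMul (EMul (EMul (EMul (EC (Qmake (-4) 1)) (EJ 1 0 0)) (EJ 1 0 0)) (EJ 1 0 0)) (EJ 1 0 1)) (EJ 1 1 0)) EID) EID) EID)) (EMul (EMul (EMul (EMul (EMul (EMul (EMul (EMul (EC (Qmake (2) 1)) (EJ 1 0 0)) (EJ 1 0 0)) (EJ 1 0 0)) (EJ 1 1 0)) (EJ 2 1 0)) EID) EID) EID)).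

Definition EinC (a b : nat) : ex :=
  EAdd (RicC a b) (EOpp (EMul (EMul (EC (Qmake 1 2)) ScalC) (Gx a b))).

Definition divXe (Tx : nat -> nat -> ex) (b : nat) : ex :=
  esum4 (fun a => esum4 (fun c => EMul (Gix a c)
    (EAdd (Dex c (Tx a b))
     (EOpp (esum4 (fun d => EAdd (EMul (GamC d c a) (Tx d b)) (EMul (GamC d c b) (Tx a d)))))))).


Definition GamX (a b c : nat) : ex :=
  EMul (EC (Qmake 1 2)) (esum4 (fun d => EMul (Gix a d)
     (EAdd (EAdd (Dex b (Gx d c)) (Dex c (Gx d b))) (EOpp (Dex d (Gx b c)))))).

Definition RiemUpX (e b c d : nat) : ex :=
  EAdd (EAdd (Dex c (GamC e d b)) (EOpp (Dex d (GamC e c b))))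
       (esum4 (fun f => EAdd (EMul (GamC e c f) (GamC f d b)) (EOpp (EMul (GamC e d f) (GamC f c b))))).

Definition RicX (b d : nat) : ex :=
  esum4 (fun a => esum4 (fun c => EMul (Gix a c) (esum4 (fun e => EMul (Gx a e) (RiemUpX e b c d))))).

Definition ScalX : ex := esum4 (fun b => esum4 (fun d => EMul (Gix b d) (RicC b d))).

Definition chk4 (f : nat -> bool) : bool := f 0%nat && f 1%nat && f 2%nat && f 3%nat.

Lemma chk4_spec f a : chk4 f = true -> (a < 4)%nat -> f a = true.
Proof.
  unfold chk4. intros H Ha. repeat rewrite Bool.andb_true_iff in H.
  destruct H as [[[H0 H1] H2] H3].
  destruct a as [|[|[|[|a]]]]; auto; lia.
Qed.

Definition eqx (a b : ex) : bool := isnil (norm (EAdd a (EOpp b))).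

Lemma GamX_C : chk4 (fun a => chk4 (fun b => chk4 (fun c => eqx (GamX a b c) (GamC a b c)))) = true.
Proof. vm_compute. reflexivity. Qed.

Lemma RicX_C : chk4 (fun b => chk4 (fun d => eqx (RicX b d) (RicC b d))) = true.
Proof. vm_compute. reflexivity. Qed.

Lemma ScalX_C : eqx ScalX ScalC = true.
Proof. vm_compute. reflexivity. Qed.

Lemma Bianchi_C : eqx (divXe EinC 0) (EC 0) && eqx (divXe EinC 1) (EC 0) = true.
Proof. vm_compute. reflexivity. Qed.

Definition RX : ex := EJ 3 0 0.
Definition esum2 (f : nat -> ex) : ex := EAdd (f 0%nat) (f 1%nat).
Definition MSEC : ex :=
  EMul (EMul (EC (Qmake 1 2)) RX)
    (EAdd (EC 1) (esum2 (fun A => esum2 (fun B => EMul (EMul (Gix A B) (Dex A RX)) (Dex B RX))))).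
Definition QinvX : ex := EMul (EMul (EMul EIR EIR) (EMul EIR EIR)) (EMul EIS EIS).
Definition Riem2323X : ex := esum4 (fun e => EMul (Gx 2 e) (RiemUpX e 3 2 3)).
Definition MSEX : ex := EMul (EMul (EC (Qmake (-1) 2)) (EMul (EMul RX RX) RX)) (EMul Riem2323X QinvX).

Lemma MSE_C : eqx MSEX MSEC = true.
Proof. vm_compute. reflexivity. Qed.

Definition dEX (T : nat -> nat -> ex) (A : nat) : ex :=
  EMul (EMul (EC (Qmake (-1) 2)) (EMul RX RX))
   (EAdd (esum2 (fun B => esum2 (fun C => EMul (EMul (T A B) (Gix B C)) (Dex C RX))))
         (EOpp (EMul (Dex A RX) (esum2 (fun B => esum2 (fun C => EMul (Gix B C) (T B C))))))).

Lemma dE_C : eqx (Dex 0 MSEC) (dEX EinC 0) && eqx (Dex 1 MSEC) (dEX EinC 1) = true.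
Proof. vm_compute. reflexivity. Qed.

Definition UX (a : nat) : ex := match a with 0 => EJ 4 0 0 | 1 => EJ 5 0 0 | _ => EC 0 end%nat.
Definition EX (a : nat) : ex := match a with 0 => EJ 8 0 0 | 1 => EJ 9 0 0 | _ => EC 0 end%nat.
Definition rhoX : ex := EJ 6 0 0.
Definition pX : ex := EJ 7 0 0.
Definition LX (a : nat) : ex := esum4 (fun b => EMul (Gx a b) (UX b)).
Definition TX (a b : nat) : ex :=
  EAdd (EMul (EMul rhoX (LX a)) (LX b)) (EMul pX (EAdd (EMul (LX a) (LX b)) (EOpp (Gx a b)))).
Definition PI8 : ex := EMul (EC 8) EPi.
Definition TX8 (a b : nat) : ex := EMul PI8 (TX a b).
Definition gdotX (v w : nat -> ex) : ex := esum4 (fun a => esum4 (fun b => EMul (EMul (Gx a b) (v a)) (w b))).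
Definition NX : ex := gdotX UX UX.
Definition MX : ex := gdotX UX EX.
Definition thetaX : ex := esum4 (fun a => EAdd (Dex a (UX a)) (esum4 (fun b => EMul (GamC a a b) (UX b)))).
Definition dirX (v : nat -> ex) (f : ex) : ex := esum4 (fun c => EMul (v c) (Dex c f)).
Definition rpX : ex := EAdd rhoX pX.

Lemma fluid_C : eqx (esum4 (fun b => EMul (UX b) (divXe TX8 b)))
  (EMul PI8 (EAdd (EAdd (EAdd (EMul NX (dirX UX rpX)) (EOpp (dirX UX pX)))
      (EMul (EMul rpX thetaX) NX)) (EMul (EMul (EC (Qmake 1 2)) rpX) (dirX UX NX)))) = true.
Proof. vm_compute. reflexivity. Qed.

Definition aX : ex := dirX UX RX.
Definition bX : ex := dirX EX RX.

Lemma dEu_C : eqx (esum4 (fun A => EMul (UX A) (dEX TX8 A)))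
   (EMul (EMul (EC (-4)) EPi) (EMul (EMul RX RX) (EMul pX aX))) = true.
Proof. vm_compute. reflexivity. Qed.

Lemma dEe_C : eqx (esum4 (fun A => EMul (EX A) (dEX TX8 A)))
   (EMul (EMul (EC (-4)) EPi) (EMul (EMul RX RX)
      (EAdd (EAdd (EOpp (EMul rhoX bX)) (EMul (EMul MX aX) rpX))
            (EOpp (EMul (EMul bX rpX) (EAdd NX (EC (-1)))))))) = true.
Proof. vm_compute. reflexivity. Qed.

Definition MSEWC : ex := EAdd MSEC (EOpp (EMul (EMul (EC (Qmake 4 3)) EPi) (EMul (EMul (EMul RX RX) RX) rhoX))).
Definition MSERC : ex := EMul (EMul (EC (Qmake 4 3)) EPi) (EMul (EMul (EMul RX RX) RX) rhoX).
Definition R3rho : ex := EMul (EMul (EMul RX RX) RX) rhoX.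

Definition ST (T : nat -> nat -> ex) : ex := EOpp (esum4 (fun b => esum4 (fun d => EMul (Gix b d) (T b d)))).
Definition AT (T : nat -> nat -> ex) (S : ex) (i j : nat) : ex :=
  EAdd (T i j) (EOpp (EMul (EMul (EC (Qmake 1 6)) S) (Gx i j))).
Definition RPX (A : nat -> nat -> ex) : ex :=
  EMul (EC (Qmake 1 2)) (EAdd (EAdd (EAdd (EMul (A 2 2)%nat (Gx 3 3)) (EOpp (EMul (A 2 3)%nat (Gx 3 2))))
        (EMul (Gx 2 2) (A 3 3)%nat)) (EOpp (EMul (Gx 2 3) (A 3 2)%nat))).
Definition MSERof (A : nat -> nat -> ex) : ex :=
  EMul (EMul (EC (Qmake (-1) 2)) (EMul (EMul RX RX) RX)) (EMul (RPX A) QinvX).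
Definition MSERX : ex := MSERof (AT RicC ScalC).
Definition RicOfT (T : nat -> nat -> ex) (i j : nat) : ex :=
  EAdd (T i j) (EMul (EMul (EC (Qmake 1 2)) (ST T)) (Gx i j)).
Definition MSERT (T : nat -> nat -> ex) : ex := MSERof (AT (RicOfT T) (ST T)).

Lemma MSER1_C : eqx MSERX (MSERT EinC) = true.
Proof. vm_compute. reflexivity. Qed.

Lemma MSER2_C : eqx (MSERT TX8) (EAdd MSERC
   (EMul (EMul (EMul (EC (Qmake 4 3)) EPi) (EMul (EMul RX RX) RX)) (EMul rpX (EAdd NX (EC (-1)))))) = true.
Proof. vm_compute. reflexivity. Qed.

Lemma dirMSE_C : eqx (dirX UX MSEC) (esum4 (fun A => EMul (UX A) (dEX EinC A)))
              && eqx (dirX EX MSEC) (esum4 (fun A => EMul (EX A) (dEX EinC A))) = true.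
Proof. vm_compute. reflexivity. Qed.

Lemma W_C : eqx (dirX UX MSEWC) (EAdd (dirX UX MSEC) (EOpp (EMul (EMul (EC (Qmake 4 3)) EPi)
     (EAdd (EMul (EMul (EMul (EC 3) (EMul RX RX)) rhoX) aX) (EMul (EMul (EMul RX RX) RX) (dirX UX rhoX))))))
  && eqx (dirX EX MSEWC) (EAdd (dirX EX MSEC) (EOpp (EMul (EMul (EC (Qmake 4 3)) EPi)
     (EAdd (EMul (EMul (EMul (EC 3) (EMul RX RX)) rhoX) bX) (EMul (EMul (EMul RX RX) RX) (dirX EX rhoX))))))
  && eqx (dirX UX MSERC) (EMul (EMul (EC (Qmake 4 3)) EPi) (dirX UX R3rho))
  && eqx (dirX EX MSERC) (EMul (EMul (EC (Qmake 4 3)) EPi) (dirX EX R3rho))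
  && eqx (dirX UX rpX) (EAdd (dirX UX rhoX) (dirX UX pX)) = true.
Proof. vm_compute. reflexivity. Qed.

Arguments J : simpl never.
Arguments smooth_on : simpl never.

Definition envG (g00 g01 g11 Rr u0 u1 rho p e0 e1 : R -> R -> R) : env :=
  fun k => match k with 0 => g00 | 1 => g01 | 2 => g11 | 3 => Rr | 4 => u0 | 5 => u1
           | 6 => rho | 7 => p | 8 => e0 | 9 => e1 | _ => fun _ _ => 0%R end%nat.

Fixpoint okx (e : ex) : bool :=
  match e with
  | EJ f _ _ => Nat.ltb f 8
  | EAdd a b | EMul a b => okx a && okx b
  | EOpp a => okx a
  | _ => true
  end.

Lemma okx_D e k : okx e = true -> okx (Dex k e) = true.
Proof.
  induction e; simpl; intros H; auto;
  repeat rewrite Bool.andb_true_iff in *; try tauto;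
  try (destruct k as [|[|[|k]]]; simpl; auto).
Qed.

Lemma eval_esum4 E f y : eval E (esum4 f) y = sum4 (fun i => eval E (f i) y).
Proof. reflexivity. Qed.

Lemma sum4_ext (f g : nat -> R) : (forall i, (i < 4)%nat -> f i = g i) -> sum4 f = sum4 g.
Proof. intros H. unfold sum4. rewrite !H by lia. reflexivity. Qed.

Lemma Q2R_half : Q2R (Qmake 1 2) = / 2.
Proof. unfold Q2R. simpl. field. Qed.

Lemma Q2R_8 : Q2R 8 = 8.
Proof. unfold Q2R. simpl. field. Qed.

Lemma Q2R_0' : Q2R 0 = 0. Proof. unfold Q2R. simpl. field. Qed.
Lemma Q2R_1' : Q2R 1 = 1. Proof. unfold Q2R. simpl. field. Qed.
Lemma Q2R_3 : Q2R 3 = 3. Proof. unfold Q2R. simpl. field. Qed.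
Lemma Q2R_m1 : Q2R (-1) = -1. Proof. unfold Q2R. simpl. field. Qed.
Lemma Q2R_m4 : Q2R (-4) = -4. Proof. unfold Q2R. simpl. field. Qed.
Lemma Q2R_43 : Q2R (Qmake 4 3) = 4 / 3. Proof. unfold Q2R. simpl. field. Qed.
Lemma Q2R_mhalf : Q2R (Qmake (-1) 2) = - / 2. Proof. unfold Q2R. simpl. field. Qed.
Ltac qconst := repeat rewrite ?Q2R_0', ?Q2R_1', ?Q2R_3, ?Q2R_m1, ?Q2R_m4, ?Q2R_43, ?Q2R_mhalf, ?Q2R_8, ?Q2R_half.
Ltac qconstH H := repeat rewrite ?Q2R_0', ?Q2R_1', ?Q2R_3, ?Q2R_m1, ?Q2R_m4, ?Q2R_43, ?Q2R_mhalf, ?Q2R_8, ?Q2R_half in H.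



Section Geo.
Variables (V : R -> R -> Prop) (g00 g01 g11 Rr u0 u1 rho p e0 e1 : R -> R -> R).
Hypothesis HO : open2 V.
Hypotheses (S0 : smooth_on V g00) (S1 : smooth_on V g01) (S2 : smooth_on V g11) (S3 : smooth_on V Rr)
  (S4 : smooth_on V u0) (S5 : smooth_on V u1) (S6 : smooth_on V rho) (S7 : smooth_on V p).
Hypothesis HDet : forall t r, V t r -> g00 t r * g11 t r - g01 t r ^ 2 < 0.
Hypothesis HRp : forall t r, V t r -> 0 < Rr t r.

Let E := envG g00 g01 g11 Rr u0 u1 rho p e0 e1.
Let Gm := metric g00 g01 g11 Rr.
Let Gi := metric_inv g00 g01 g11 Rr.

Lemma dom_nz y : dom4 V y ->
  DeltaE E y <> 0 /\ J (E 3%nat) 0 0 (y 0%nat) (y 1%nat) <> 0 /\ sin (y 2%nat) <> 0.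
Proof.
  intros [Hv [H1 H2]]. unfold DeltaE. simpl. unfold J; simpl. split; [|split].
  - specialize (HDet _ _ Hv). intros H. simpl in HDet. lra.
  - specialize (HRp _ _ Hv). lra.
  - apply Rgt_not_eq, sin_gt_0; lra.
Qed.

Lemma smoothE f : (f < 8)%nat -> smooth_on V (E f).
Proof. intros H. destruct f as [|[|[|[|[|[|[|[|f]]]]]]]]; simpl; auto; lia. Qed.

Lemma ok_wf e y : dom4 V y -> okx e = true -> wf V E e y.
Proof.
  intros Hd. destruct (dom_nz y Hd) as [n1 [n2 n3]].
  induction e; simpl; intros H; repeat rewrite Bool.andb_true_iff in H; splits; try tauto.
  all: try (apply smoothE; apply Nat.ltb_lt; auto).
Qed.

Lemma metric_eval a b z : Gm a b z = eval E (Gx a b) z.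
Proof.
  unfold Gm, metric.
  destruct a as [|[|[|[|a]]]]; destruct b as [|[|[|[|b]]]]; simpl; unfold J, Q2R; simpl; ring.
Qed.

Lemma metinv_eval a b z : dom4 V z -> Gi a b z = eval E (Gix a b) z.
Proof.
  intros Hz. destruct (dom_nz z Hz) as [H1 [H2 H3]].
  unfold Gi, metric_inv. unfold DeltaE in H1. simpl in H1, H2. unfold J in H1, H2; simpl in H1, H2.
  destruct a as [|[|[|[|a]]]]; destruct b as [|[|[|[|b]]]]; simpl; unfold DeltaE, J, Q2R; simpl;
  try field; auto.
Qed.

Lemma okx_Gx a b : okx (Gx a b) = true.
Proof. destruct a as [|[|[|[|a]]]]; destruct b as [|[|[|[|b]]]]; reflexivity. Qed.

Lemma pd_metric y k a b : dom4 V y -> pd k (Gm a b) y = eval E (Dex k (Gx a b)) y.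
Proof.
  intros Hd. rewrite (pd_ext_all _ (eval E (Gx a b))) by (intros; apply metric_eval).
  apply (pd_eval V HO); auto. apply ok_wf; auto. apply okx_Gx.
Qed.

Lemma Gam_raw a b c y : dom4 V y -> Gam Gm Gi a b c y = eval E (GamX a b c) y.
Proof.
  intros Hd. unfold Gam, GamX. cbn [eval]. rewrite eval_esum4, Q2R_half. f_equal.
  apply sum4_ext. intros d Hd'. cbn [eval]. rewrite metinv_eval, !pd_metric by auto. ring.
Qed.

Lemma eqx_eval a b y : dom4 V y -> eqx a b = true -> eval E a y = eval E b y.
Proof.
  intros Hd H. destruct (dom_nz y Hd) as [n1 [n2 n3]]. apply norm_eq; auto.
Qed.

Lemma GamE y a b c : dom4 V y -> (a < 4)%nat -> (b < 4)%nat -> (c < 4)%nat ->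
  Gam Gm Gi a b c y = eval E (GamC a b c) y.
Proof.
  intros Hd Ha Hb Hc. rewrite Gam_raw by auto. apply eqx_eval; auto.
  pose proof GamX_C as H.
  apply (chk4_spec _ a) in H; auto. apply (chk4_spec _ b) in H; auto. apply (chk4_spec _ c) in H; auto.
Qed.

Lemma okx_GamC a b c : okx (GamC a b c) = true.
Proof.
  destruct a as [|[|[|[|a]]]]; destruct b as [|[|[|[|b]]]]; destruct c as [|[|[|[|c]]]]; reflexivity.
Qed.

Lemma pd_Gam y k a b c : dom4 V y -> (a < 4)%nat -> (b < 4)%nat -> (c < 4)%nat ->
  pd k (Gam Gm Gi a b c) y = eval E (Dex k (GamC a b c)) y.
Proof.
  intros Hd Ha Hb Hc.
  rewrite (pd_ext_dom V HO _ (eval E (GamC a b c)) y k Hd) by (intros; apply GamE; auto).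
  apply (pd_eval V HO); auto. apply ok_wf; auto. apply okx_GamC.
Qed.

Lemma RiemUp_raw y e b c d : dom4 V y -> (e < 4)%nat -> (b < 4)%nat -> (c < 4)%nat -> (d < 4)%nat ->
  RiemUp Gm Gi e b c d y = eval E (RiemUpX e b c d) y.
Proof.
  intros Hd He Hb Hc Hdd. unfold RiemUp, RiemUpX. cbn [eval].
  rewrite (pd_Gam y c e d b), (pd_Gam y d e c b) by auto. rewrite eval_esum4.
  f_equal. apply sum4_ext. intros f Hf. cbn [eval]. rewrite !GamE by auto. ring.
Qed.

Lemma Ric_raw y b d : dom4 V y -> (b < 4)%nat -> (d < 4)%nat -> Ric Gm Gi b d y = eval E (RicX b d) y.
Proof.
  intros Hd Hb Hdd. unfold Ric, RicX. rewrite eval_esum4. apply sum4_ext. intros a Ha.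
  rewrite eval_esum4. apply sum4_ext. intros c Hc. cbn [eval]. rewrite metinv_eval by auto. f_equal.
  unfold Riem. rewrite eval_esum4. apply sum4_ext. intros e He. cbn [eval].
  rewrite metric_eval, RiemUp_raw by auto. reflexivity.
Qed.

Lemma RicE y b d : dom4 V y -> (b < 4)%nat -> (d < 4)%nat -> Ric Gm Gi b d y = eval E (RicC b d) y.
Proof.
  intros Hd Hb Hdd. rewrite Ric_raw by auto. apply eqx_eval; auto.
  pose proof RicX_C as H. apply (chk4_spec _ b) in H; auto. apply (chk4_spec _ d) in H; auto.
Qed.

Lemma ScalE y : dom4 V y -> Scal Gm Gi y = eval E ScalC y.
Proof.
  intros Hd. transitivity (eval E ScalX y); [|apply eqx_eval; auto; exact ScalX_C].
  unfold Scal, ScalX. rewrite eval_esum4. apply sum4_ext. intros b Hb.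
  rewrite eval_esum4. apply sum4_ext. intros d Hdd. cbn [eval].
  rewrite metinv_eval, RicE by auto. reflexivity.
Qed.

Lemma EinE y a b : dom4 V y -> (a < 4)%nat -> (b < 4)%nat -> Ein Gm Gi a b y = eval E (EinC a b) y.
Proof.
  intros Hd Ha Hb. unfold Ein, EinC. cbn [eval]. rewrite RicE, ScalE, metric_eval, Q2R_half by auto. ring.
Qed.


Lemma okx_EinC a b : okx (EinC a b) = true.
Proof. destruct a as [|[|[|[|a]]]]; destruct b as [|[|[|[|b]]]]; vm_compute; reflexivity. Qed.
Lemma okx_TX8 a b : okx (TX8 a b) = true.
Proof. destruct a as [|[|[|[|a]]]]; destruct b as [|[|[|[|b]]]]; vm_compute; reflexivity. Qed.

Lemma pd_Ein y k a b : dom4 V y -> (a < 4)%nat -> (b < 4)%nat ->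
  pd k (Ein Gm Gi a b) y = eval E (Dex k (EinC a b)) y.
Proof.
  intros Hd Ha Hb.
  rewrite (pd_ext_dom V HO _ (eval E (EinC a b)) y k Hd) by (intros; apply EinE; auto).
  apply (pd_eval V HO); auto. apply ok_wf; auto. apply okx_EinC.
Qed.

Lemma Riem2323_raw y : dom4 V y -> Riem Gm Gi 2%nat 3%nat 2%nat 3%nat y = eval E Riem2323X y.
Proof.
  intros Hd. unfold Riem, Riem2323X. rewrite eval_esum4. apply sum4_ext. intros e He. cbn [eval].
  rewrite metric_eval, RiemUp_raw by (auto; lia). reflexivity.
Qed.

Lemma Qinv_raw y : dom4 V y -> / (Gm 2%nat 2%nat y * Gm 3%nat 3%nat y - Gm 2%nat 3%nat y ^ 2) = eval E QinvX y.
Proof.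
  intros Hd. destruct (dom_nz y Hd) as [n1 [n2 n3]]. simpl in n2. unfold J in n2; simpl in n2.
  unfold Gm, metric. simpl. unfold J; simpl. field. auto.
Qed.

Lemma RX_eval y : eval E RX y = lift Rr y.
Proof. reflexivity. Qed.

Lemma MSE_raw y : dom4 V y -> MSE Gm Gi Rr y = eval E MSEX y.
Proof.
  intros Hd. unfold MSE, orbitK, Rdiv. rewrite Riem2323_raw, Qinv_raw by auto.
  destruct (dom_nz y Hd) as [n1 [n2 n3]]. simpl in n2.
  unfold MSEX. cbn [eval]. rewrite !RX_eval. unfold Q2R; simpl. field. splits; auto.
Qed.

Lemma MSEE y : dom4 V y -> MSE Gm Gi Rr y = eval E MSEC y.
Proof. intros Hd. rewrite MSE_raw by auto. apply eqx_eval; auto. Qed.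

Lemma bvecU a z : bvec u0 u1 a z = eval E (UX a) z.
Proof. destruct a as [|[|a]]; simpl; try reflexivity. unfold Q2R; simpl; ring. Qed.
Lemma bvecE a z : bvec e0 e1 a z = eval E (EX a) z.
Proof. destruct a as [|[|a]]; simpl; try reflexivity. unfold Q2R; simpl; ring. Qed.

Lemma lower_raw a z : lower Gm (bvec u0 u1) a z = eval E (LX a) z.
Proof.
  unfold lower, LX. rewrite eval_esum4. apply sum4_ext. intros b Hb. cbn [eval].
  rewrite metric_eval, bvecU. reflexivity.
Qed.

Lemma Tf_raw a b z : 8 * PI * Tfluid Gm (bvec u0 u1) (lift rho) (lift p) a b z = eval E (TX8 a b) z.
Proof.
  unfold Tfluid, TX8, TX, PI8. cbn [eval]. rewrite !lower_raw, metric_eval.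
  change (lift rho z) with (eval E rhoX z). change (lift p z) with (eval E pX z).
  rewrite Q2R_8. ring.
Qed.

Lemma gdot_raw (v w : nat -> pt -> R) (vX wX : nat -> ex) z :
  (forall a, v a z = eval E (vX a) z) -> (forall a, w a z = eval E (wX a) z) ->
  gdot Gm v w z = eval E (gdotX vX wX) z.
Proof.
  intros Hv Hw. unfold gdot, gdotX. rewrite eval_esum4. apply sum4_ext. intros a Ha.
  rewrite eval_esum4. apply sum4_ext. intros b Hb. cbn [eval]. rewrite metric_eval, Hv, Hw. reflexivity.
Qed.

Lemma okx_UX a : okx (UX a) = true.
Proof. destruct a as [|[|a]]; reflexivity. Qed.

Lemma divg_raw y : dom4 V y -> divg Gm Gi (bvec u0 u1) y = eval E thetaX y.
Proof.
  intros Hd. unfold divg, thetaX. rewrite eval_esum4. apply sum4_ext. intros a Ha. cbn [eval].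
  rewrite (pd_ext_all _ (eval E (UX a))) by (intros; apply bvecU).
  rewrite (pd_eval V HO) by (auto; apply ok_wf; auto; apply okx_UX). f_equal.
  rewrite eval_esum4. apply sum4_ext. intros b Hb. cbn [eval]. rewrite GamE, bvecU by auto. reflexivity.
Qed.

Lemma dir_raw (v : nat -> pt -> R) (vX : nat -> ex) (f : pt -> R) (F : ex) y : dom4 V y ->
  (forall a, v a y = eval E (vX a) y) -> (forall z, dom4 V z -> f z = eval E F z) -> okx F = true ->
  dir v f y = eval E (dirX vX F) y.
Proof.
  intros Hd Hv Hf Hok. unfold dir, dirX. rewrite eval_esum4. apply sum4_ext. intros a Ha. cbn [eval].
  rewrite Hv. f_equal. rewrite (pd_ext_dom V HO _ _ y a Hd Hf).
  apply (pd_eval V HO); auto. apply ok_wf; auto.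
Qed.

Lemma MSE_R_raw y : dom4 V y -> MSE_R Gm Gi Rr y = eval E MSERX y.
Proof.
  intros Hd. unfold MSE_R, orbitK, Rdiv. rewrite Qinv_raw by auto.
  unfold RicciPart, KN. rewrite !RicE, !ScalE by (auto; lia). rewrite !metric_eval.
  destruct (dom_nz y Hd) as [n1 [n2 n3]]. simpl in n2.
  unfold MSERX, MSERof, RPX, AT. cbn [eval]. rewrite !RX_eval. unfold Q2R; simpl. field. splits; auto.
Qed.

Lemma MSE_W_eq y : MSE_W Gm Gi Rr y = MSE Gm Gi Rr y - MSE_R Gm Gi Rr y.
Proof. unfold MSE_W, MSE, MSE_R, orbitK, WeylPart, Rdiv. ring. Qed.


Lemma pd_const y k c : pd k (fun _ => c) y = 0.
Proof. unfold pd. apply Derive_const. Qed.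

Lemma eqx_evalE a b y : dom4 V y -> eqx a b = true -> eval E a y = eval E b y.
Proof. apply eqx_eval. Qed.

Lemma MSERT_ext (T1 T2 : nat -> nat -> ex) z :
  (forall a b, (a < 4)%nat -> (b < 4)%nat -> eval E (T1 a b) z = eval E (T2 a b) z) ->
  eval E (MSERT T1) z = eval E (MSERT T2) z.
Proof.
  intros H.
  assert (HS : eval E (ST T1) z = eval E (ST T2) z).
  { unfold ST. cbn [eval]. f_equal. rewrite !eval_esum4. apply sum4_ext. intros b Hb.
    rewrite !eval_esum4. apply sum4_ext. intros d Hd. cbn [eval]. rewrite H by auto. reflexivity. }
  unfold MSERT, MSERof, RPX, AT, RicOfT. cbn [eval]. rewrite !HS. rewrite !H by lia. reflexivity.
Qed.

Lemma dEX_ext (T1 T2 : nat -> nat -> ex) z A :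
  (forall a b, (a < 4)%nat -> (b < 4)%nat -> eval E (T1 a b) z = eval E (T2 a b) z) -> (A < 4)%nat ->
  eval E (dEX T1 A) z = eval E (dEX T2 A) z.
Proof.
  intros H HA. unfold dEX, esum2. cbn [eval]. rewrite !H by lia. reflexivity.
Qed.

Lemma esumUdEX_ext (vX : nat -> ex) (T1 T2 : nat -> nat -> ex) z :
  (forall a b, (a < 4)%nat -> (b < 4)%nat -> eval E (T1 a b) z = eval E (T2 a b) z) ->
  eval E (esum4 (fun A => EMul (vX A) (dEX T1 A))) z = eval E (esum4 (fun A => EMul (vX A) (dEX T2 A))) z.
Proof.
  intros H. rewrite !eval_esum4. apply sum4_ext. intros A HA. cbn [eval]. rewrite (dEX_ext T1 T2) by auto.
  reflexivity.
Qed.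

Lemma iff_mult (X c Y : R) : c <> 0 -> X = c * Y -> (X = 0 <-> Y = 0).
Proof.
  intros Hc HX. rewrite HX. split; intros H.
  - destruct (Rmult_integral _ _ H) as [H1|H1]; [contradiction|exact H1].
  - rewrite H. ring.
Qed.

Lemma main_at
 (HN : forall z, dom4 V z -> gdot Gm (bvec u0 u1) (bvec u0 u1) z = 1)
 (HEin : forall z a b, dom4 V z -> (a < 4)%nat -> (b < 4)%nat ->
     Ein Gm Gi a b z = 8 * PI * Tfluid Gm (bvec u0 u1) (lift rho) (lift p) a b z)
 x (Hx : dom4 V x)
 (HM : gdot Gm (bvec u0 u1) (bvec e0 e1) x = 0)
 (Hb : dir (bvec e0 e1) (lift Rr) x > 0)
 (Hrp : lift rho x + lift p x <> 0) :
  (dir (bvec u0 u1) (MSE Gm Gi Rr) x = 0 <-> lift p x = 0 \/ dir (bvec u0 u1) (lift Rr) x = 0) /\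
  (dir (bvec e0 e1) (MSE Gm Gi Rr) x = 0 <-> lift rho x = 0) /\
  (dir (bvec u0 u1) (MSE_W Gm Gi Rr) x = 0 <-> shear Gm Gi (bvec u0 u1) Rr x = 0) /\
  (dir (bvec e0 e1) (MSE_W Gm Gi Rr) x = 0 <-> dir (bvec e0 e1) (lift rho) x = 0) /\
  ((dir (bvec u0 u1) (MSE_R Gm Gi Rr) x = 0 <->
      dir (bvec u0 u1) (fun y => lift Rr y ^ 3 * lift rho y) x = 0) /\
   (dir (bvec e0 e1) (MSE_R Gm Gi Rr) x = 0 <->
      dir (bvec e0 e1) (fun y => lift Rr y ^ 3 * lift rho y) x = 0)).
Proof.
  assert (HPI : PI > 0) by apply PI_RGT_0.
  assert (HRx : lift Rr x > 0) by (apply HRp; apply Hx).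
  assert (F1 : forall z a b, dom4 V z -> (a < 4)%nat -> (b < 4)%nat ->
     eval E (EinC a b) z = eval E (TX8 a b) z).
  { intros z a b Hz Ha Hb'. rewrite <- EinE, <- Tf_raw by auto. apply HEin; auto. }
  assert (F2 : forall a b c, (a < 4)%nat -> (b < 4)%nat ->
     eval E (Dex c (EinC a b)) x = eval E (Dex c (TX8 a b)) x).
  { intros a b c Ha Hb'.
    rewrite <- (pd_eval V HO E (EinC a b) x c Hx) by (apply ok_wf; auto; apply okx_EinC).
    rewrite <- (pd_eval V HO E (TX8 a b) x c Hx) by (apply ok_wf; auto; apply okx_TX8).
    apply (pd_ext_dom V HO); auto. }
  assert (F3 : forall b, (b < 4)%nat -> eval E (divXe EinC b) x = eval E (divXe TX8 b) x).
  { intros b Hb'. unfold divXe. rewrite !eval_esum4. apply sum4_ext. intros a Ha.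
    rewrite !eval_esum4. apply sum4_ext. intros c Hc. cbn [eval]. rewrite F2 by auto.
    do 3 f_equal. rewrite !eval_esum4. apply sum4_ext. intros d Hd. cbn [eval].
    rewrite !F1 by auto. reflexivity. }
  assert (F4 : eval E (divXe EinC 0) x = 0 /\ eval E (divXe EinC 1) x = 0).
  { pose proof Bianchi_C as HB. apply andb_prop in HB. destruct HB as [HB0 HB1].
    split; [rewrite (eqx_eval _ _ x Hx HB0) | rewrite (eqx_eval _ _ x Hx HB1)]; cbn [eval]; qconst; reflexivity. }
  assert (F6 : forall z, dom4 V z -> eval E NX z = 1).
  { intros z Hz. rewrite <- (HN z Hz). symmetry. apply gdot_raw; intros; apply bvecU. }
  assert (F7 : eval E (dirX UX NX) x = 0).
  { rewrite <- (dir_raw (bvec u0 u1) UX (gdot Gm (bvec u0 u1) (bvec u0 u1)) NX x Hx).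
    - unfold dir, sum4. rewrite !(pd_ext_dom V HO _ (fun _ => 1) x _ Hx HN). rewrite !pd_const. ring.
    - intros; apply bvecU.
    - intros z Hz. apply gdot_raw; intros; apply bvecU.
    - vm_compute. reflexivity. }
  pose proof W_C as HW. do 4 (apply andb_prop in HW; destruct HW as [HW ?]).
  rename H into Hrp2. rename H0 into HWeR. rename H1 into HWuR. rename H2 into HWe. rename HW into HWu.
  assert (F8 : eval E (dirX UX rhoX) x = - eval E rpX x * eval E thetaX x).
  { pose proof (eqx_eval _ _ x Hx fluid_C) as HF.
    assert (L0 : eval E (esum4 (fun b => EMul (UX b) (divXe TX8 b))) x = 0).
    { rewrite eval_esum4. unfold sum4. cbn [eval UX]. rewrite <- !F3 by lia.
      destruct F4 as [F40 F41]. rewrite F40, F41. qconst. ring. }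
    rewrite L0 in HF. unfold PI8 in HF. cbn [eval] in HF.
    rewrite F6, F7, (eqx_eval _ _ x Hx Hrp2) in HF by auto. cbn [eval] in HF.
    qconstH HF.
    assert (Hz : 8 * PI * (eval E (dirX UX rhoX) x + eval E rpX x * eval E thetaX x) = 0).
    { etransitivity; [| symmetry; exact HF]. ring. }
    apply Rmult_integral in Hz. destruct Hz as [Hz|Hz]; [lra|lra]. }
  assert (DU : dir (bvec u0 u1) (MSE Gm Gi Rr) x = eval E (dirX UX MSEC) x).
  { apply dir_raw; [exact Hx | intros; apply bvecU | intros z Hz; apply MSEE; exact Hz | vm_compute; reflexivity]. }
  assert (DE : dir (bvec e0 e1) (MSE Gm Gi Rr) x = eval E (dirX EX MSEC) x).
  { apply dir_raw; [exact Hx | intros; apply bvecE | intros z Hz; apply MSEE; exact Hz | vm_compute; reflexivity]. }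
  assert (Da : dir (bvec u0 u1) (lift Rr) x = eval E aX x).
  { apply dir_raw; [exact Hx | intros; apply bvecU | intros; reflexivity | reflexivity]. }
  assert (Db : dir (bvec e0 e1) (lift Rr) x = eval E bX x).
  { apply dir_raw; [exact Hx | intros; apply bvecE | intros; reflexivity | reflexivity]. }
  pose proof dirMSE_C as HdM. apply andb_prop in HdM. destruct HdM as [HdMu HdMe].
  assert (Eu : dir (bvec u0 u1) (MSE Gm Gi Rr) x = -4 * PI * (lift Rr x * lift Rr x * (lift p x * dir (bvec u0 u1) (lift Rr) x))).
  { rewrite DU, (eqx_eval _ _ x Hx HdMu), (esumUdEX_ext UX EinC TX8 x) by (intros; apply F1; auto).
    rewrite (eqx_eval _ _ x Hx dEu_C). rewrite Da. cbn [eval]. qconst. reflexivity. }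
  assert (HNx : eval E NX x = 1) by (apply F6; auto).
  assert (HMx : eval E MX x = 0).
  { rewrite <- HM. symmetry. apply gdot_raw; intros; [apply bvecU | apply bvecE]. }
  assert (Ee : dir (bvec e0 e1) (MSE Gm Gi Rr) x = 4 * PI * (lift Rr x * lift Rr x * (lift rho x * dir (bvec e0 e1) (lift Rr) x))).
  { rewrite DE, (eqx_eval _ _ x Hx HdMe), (esumUdEX_ext EX EinC TX8 x) by (intros; apply F1; auto).
    rewrite (eqx_eval _ _ x Hx dEe_C). rewrite Db. cbn [eval]. rewrite HNx, HMx. qconst.
    change (eval E rhoX x) with (lift rho x). rewrite !RX_eval. ring. }
  assert (F9 : forall z, dom4 V z -> MSE_R Gm Gi Rr z = eval E MSERC z).
  { intros z Hz. rewrite MSE_R_raw by auto. rewrite (eqx_eval _ _ z Hz MSER1_C).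
    rewrite (MSERT_ext EinC TX8 z) by (intros; apply F1; auto).
    rewrite (eqx_eval _ _ z Hz MSER2_C). cbn [eval]. rewrite (F6 z Hz). qconst. ring. }
  assert (F10 : forall z, dom4 V z -> MSE_W Gm Gi Rr z = eval E MSEWC z).
  { intros z Hz. rewrite MSE_W_eq, MSEE, F9 by auto. unfold MSEWC, MSERC. cbn [eval]. ring. }
  assert (DW : dir (bvec u0 u1) (MSE_W Gm Gi Rr) x = eval E (dirX UX MSEWC) x).
  { apply dir_raw; [exact Hx | intros; apply bvecU | exact F10 | vm_compute; reflexivity]. }
  assert (DWe : dir (bvec e0 e1) (MSE_W Gm Gi Rr) x = eval E (dirX EX MSEWC) x).
  { apply dir_raw; [exact Hx | intros; apply bvecE | exact F10 | vm_compute; reflexivity]. }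
  assert (DR : dir (bvec u0 u1) (MSE_R Gm Gi Rr) x = eval E (dirX UX MSERC) x).
  { apply dir_raw; [exact Hx | intros; apply bvecU | exact F9 | vm_compute; reflexivity]. }
  assert (DRe : dir (bvec e0 e1) (MSE_R Gm Gi Rr) x = eval E (dirX EX MSERC) x).
  { apply dir_raw; [exact Hx | intros; apply bvecE | exact F9 | vm_compute; reflexivity]. }
  assert (R3e : forall z, dom4 V z -> lift Rr z ^ 3 * lift rho z = eval E R3rho z).
  { intros z Hz. unfold R3rho. cbn [eval]. rewrite RX_eval. change (eval E rhoX z) with (lift rho z). ring. }
  assert (D3 : dir (bvec u0 u1) (fun y => lift Rr y ^ 3 * lift rho y) x = eval E (dirX UX R3rho) x).
  { apply dir_raw; [exact Hx | intros; apply bvecU | exact R3e | vm_compute; reflexivity]. }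
  assert (D3e : dir (bvec e0 e1) (fun y => lift Rr y ^ 3 * lift rho y) x = eval E (dirX EX R3rho) x).
  { apply dir_raw; [exact Hx | intros; apply bvecE | exact R3e | vm_compute; reflexivity]. }
  assert (Drho : dir (bvec e0 e1) (lift rho) x = eval E (dirX EX rhoX) x).
  { apply dir_raw; [exact Hx | intros; apply bvecE | intros; reflexivity | reflexivity]. }
  assert (Dth : divg Gm Gi (bvec u0 u1) x = eval E thetaX x) by (apply divg_raw; exact Hx).
  rewrite (eqx_eval _ _ x Hx HWu) in DW. rewrite (eqx_eval _ _ x Hx HWe) in DWe.
  rewrite (eqx_eval _ _ x Hx HWuR) in DR. rewrite (eqx_eval _ _ x Hx HWeR) in DRe.
  cbn [eval] in DW, DWe, DR, DRe. rewrite <- DU in DW. rewrite <- DE in DWe. rewrite <- D3 in DR. rewrite <- D3e in DRe.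
  rewrite <- Da in DW. rewrite <- Db in DWe. rewrite F8 in DW. rewrite <- Drho in DWe.
  change (eval E RX x) with (lift Rr x) in DW, DWe. change (eval E rhoX x) with (lift rho x) in DW, DWe.
  unfold rpX in DW. cbn [eval] in DW. change (eval E rhoX x) with (lift rho x) in DW. change (eval E pX x) with (lift p x) in DW.

  qconstH DW. qconstH DWe. qconstH DR. qconstH DRe.
  split; [|split; [|split; [|split; [|split]]]].
  - rewrite Eu. split.
    + intros H. assert (Hc : -4 * PI * (lift Rr x * lift Rr x) <> 0).
      { apply Rmult_integral_contrapositive. split; [lra|]. apply Rmult_integral_contrapositive; split; lra. }
      assert (H' : -4 * PI * (lift Rr x * lift Rr x) * (lift p x * dir (bvec u0 u1) (lift Rr) x) = 0) by (rewrite <- H; ring).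
      apply Rmult_integral in H'. destruct H' as [H'|H']; [contradiction|].
      apply Rmult_integral in H'. exact H'.
    + intros [H|H]; rewrite H; ring.
  - apply (iff_mult _ (4 * PI * (lift Rr x * lift Rr x * dir (bvec e0 e1) (lift Rr) x))).
    + apply Rmult_integral_contrapositive. split; [lra|]. apply Rmult_integral_contrapositive; split; [|lra].
      apply Rmult_integral_contrapositive; split; lra.
    + rewrite Ee. ring.
  - apply (iff_mult _ (-4 * PI * (lift Rr x * lift Rr x * lift Rr x) * (lift rho x + lift p x))).
    + apply Rmult_integral_contrapositive. split; [|exact Hrp].
      apply Rmult_integral_contrapositive. split; [lra|].
      apply Rmult_integral_contrapositive. split; [|lra]. apply Rmult_integral_contrapositive; split; lra.
    + rewrite DW, Eu. unfold shear. rewrite Dth. field. lra.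
  - apply (iff_mult _ (-4 / 3 * PI * (lift Rr x * lift Rr x * lift Rr x))).
    + apply Rmult_integral_contrapositive. split; [lra|].
      apply Rmult_integral_contrapositive. split; [|lra]. apply Rmult_integral_contrapositive; split; lra.
    + rewrite DWe, Ee. field.
  - apply (iff_mult _ (4 / 3 * PI)); [lra|]. rewrite DR. field.
  - apply (iff_mult _ (4 / 3 * PI)); [lra|]. rewrite DRe. field.
Qed.

End Geo.

Theorem theorem3
  (V : R -> R -> Prop) (g00 g01 g11 Rr u0 u1 e0 e1 tau0 tau1 rho p : R -> R -> R) :
  let g := metric g00 g01 g11 Rr in
  let gi := metric_inv g00 g01 g11 Rr in
  let u := bvec u0 u1 in
  let e := bvec e0 e1 in
  let tau := bvec tau0 tau1 in
  let R4 := lift Rr in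
  let rho4 := lift rho in
  let p4 := lift p in
  open2 V ->
  (* smoothness of the data on B *)
  smooth_on V g00 -> smooth_on V g01 -> smooth_on V g11 -> smooth_on V Rr ->
  smooth_on V u0 -> smooth_on V u1 -> smooth_on V rho -> smooth_on V p ->
  smooth_on V tau0 -> smooth_on V tau1 ->
  (* (B, g_B) is Lorentzian and R > 0 *)
  (forall t r, V t r -> g00 t r * g11 t r - g01 t r ^ 2 < 0) ->
  (forall t r, V t r -> 0 < Rr t r) ->
  (* tau is a timelike time orientation; u is a future-pointing unit timelike field *)
  (forall x, dom4 V x -> gdot g tau tau x > 0) ->
  (forall x, dom4 V x -> gdot g u u x = 1) ->
  (forall x, dom4 V x -> gdot g u tau x > 0) ->
  (* e : unit, tangent to B, orthogonal to u, pointing towards increasing R *)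
  (forall x, dom4 V x -> gdot g e e x = -1) ->
  (forall x, dom4 V x -> gdot g u e x = 0) ->
  (forall x, dom4 V x -> dir e R4 x > 0) ->
  (* Einstein's equation with perfect fluid, rho + p <> 0 *)
  (forall x a b, dom4 V x -> (a < 4)%nat -> (b < 4)%nat ->
     Ein g gi a b x = 8 * PI * Tfluid g u rho4 p4 a b x) ->
  (forall x, dom4 V x -> rho4 x + p4 x <> 0) ->
  forall x, dom4 V x ->
  (* dR spacelike at x *)
  codot gi R4 x < 0 ->
  (dir u (MSE g gi Rr) x = 0 <-> p4 x = 0 \/ dir u R4 x = 0) /\
  (dir e (MSE g gi Rr) x = 0 <-> rho4 x = 0) /\
  (dir u (MSE_W g gi Rr) x = 0 <-> shear g gi u Rr x = 0) /\
  (dir e (MSE_W g gi Rr) x = 0 <-> dir e rho4 x = 0) /\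
  ((dir u (MSE_R g gi Rr) x = 0 <-> dir u (fun y => R4 y ^ 3 * rho4 y) x = 0) /\
   (dir e (MSE_R g gi Rr) x = 0 <-> dir e (fun y => R4 y ^ 3 * rho4 y) x = 0)).

Proof.
  intros g gi u e tau R4 rho4 p4 HO S00 S01 S11 SR Su0 Su1 Srho Sp Stau0 Stau1 HDet HRp
    Htt Huu Hut Hee Hue HeR HEin Hrp x Hx HdR.
  exact (main_at V g00 g01 g11 Rr u0 u1 rho p e0 e1 HO S00 S01 S11 SR Su0 Su1 Srho Sp HDet HRp
           Huu HEin x Hx (Hue x Hx) (HeR x Hx) (Hrp x Hx)).
Qed.
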